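(* Consider problem (P) and suppose Assumptions A and B hold. Then: (i) Algorithm SCP$_{ls}$ is well defined: every subproblem (S) arising in the algorithm has a unique solution, and there is $k_0\in\mathbb N_+$, independent of $t$, such that at every outer iteration $t\ge 0$ the inner loop (step (3)) terminates after at most $k_0$ inner iterations, producing $x^{t+1}$ with $g(x^{t+1})\le 0$. (ii) The sequence $\{(L_f^t,L_g^t)\}$ generated by SCP$_{ls}$ is bounded. (iii) For every $t\ge 0$, every trial pair $(\tilde L_f,\tilde L_g)$ used in the inner loop at iteration $t$ and every $i\in\{1,\dots,m\}$, the number $\tilde R_i:=\big\|\nabla g_i(x^t)/(\tilde L_g)_i\big\|^2-\frac{2}{(\tilde L_g)_i}g_i(x^t)$ is strictly positive. (iv) For every $t\ge0$ and every trial pair $(\tilde L_f,\tilde L_g)$ at iteration $t$, with $\tilde x$ the solution of (S), the subproblem (S) has a Lagrange multiplier $\tilde\lambda\in\mathbb R^m_+$; setting $\tilde L_{fg}:=\tilde L_f+\langle\tilde\lambda,\tilde L_g\rangle$, one has $\tilde\lambda_i\big(g_i(x^t)+\langle\nabla g_i(x^t),\tilde x-x^t\rangle+\frac{(\tilde L_g)_i}{2}\|\tilde x-x^t\|^2\big)=0$ for all $i$, and $0\in\nabla f(x^t)-\xi^t+\tilde L_{fg}(\tilde x-x^t)+\partial P_1(\tilde x)+\sum_{i=1}^m\tilde\lambda_i\nabla g_i(x^t)$. Moreover, if $g(\tilde x)\le 0$, then for every $x\in\mathbb R^n$, $F(\tilde x)\le f(x^t)+\langle\nabla f(x^t)-\xi^t,x-x^t\rangle+\frac{\tilde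 L_{fg}}{2}\|x-x^t\|^2+P_1(x)-P_2(x^t)+\sum_{i=1}^m\tilde\lambda_i\big(g_i(x^t)+\langle\nabla g_i(x^t),x-x^t\rangle\big)-\frac{\tilde L_{fg}}{2}\|x-\tilde x\|^2-\frac{\tilde L_f-L_f}{2}\|\tilde x-x^t\|^2$, where $L_f$ is the Lipschitz modulus of $\nabla f$ from Assumption A(i).
   Context: Problem (P): $\min_{x\in\mathbb R^n}F(x):=f(x)+P_1(x)-P_2(x)+\delta_{\{g\le 0\}}(x)$, where $f:\mathbb R^n\to\mathbb R$ is continuously differentiable, $P_1,P_2:\mathbb R^n\to\mathbb R$ are convex and continuous (possibly nonsmooth), $g=(g_1,\dots,g_m):\mathbb R^n\to\mathbb R^m$ is continuous with $\{x:g(x)\le0\}\neq\emptyset$ (inequalities between vectors are componentwise), and $\delta_C$ denotes the indicator function of $C$ (equal to $0$ on $C$ and $+\infty$ outside). $\partial$ denotes the (limiting) subdifferential; for convex functions it is the usual convex subdifferential. Assumption A: (i) $\nabla f$ is Lipschitz with modulus $L_f$; (ii) each $g_i$ is differentiable with $\nabla g_i$ Lipschitz with modulus $L_{g_i}$; (iii) $F$ is level-bounded. Assumption B (MFCQ): each $g_i$ is continuously differentiable and for every $x$ with $g(x)\le0$ there exists $d\in\mathbb R^n$ with $\langle\nabla g_i(x),d\rangle<0$ for all $i\in I(x):=\{j:g_j(x)=0\}$. For $x,y\in\mathbb R^n$, $w\in\mathbb R^m$, let $\bar G(x,y,w)\in\mathbb R^m$ have components $\bar G_i(x,y,w)=g_i(y)+\langle\nabla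 g_i(y),x-y\rangle+\frac{w_i}{2}\|x-y\|^2$. Algorithm SCP$_{ls}$: fix $c>0$, $0<\underline L<\bar L$, $\tau>1$ and $x^0$ with $g(x^0)\le0$. For $t=0,1,2,\dots$: (1) pick any $\xi^t\in\partial P_2(x^t)$; (2) choose $L_f^{t,0}\in[\underline L,\bar L]$ and $L_g^{t,0}\in[\underline L,\bar L]^m$ arbitrarily and set $\tilde L_f=L_f^{t,0}$, $\tilde L_g=L_g^{t,0}$; (3) compute $\tilde x$ solving the subproblem (S): minimize $\langle\nabla f(x^t)-\xi^t,x-x^t\rangle+\frac{\tilde L_f}{2}\|x-x^t\|^2+P_1(x)$ subject to $\bar G(x,x^t,\tilde L_g)\le0$. If $g(\tilde x)\le0$ and $F(\tilde x)\le F(x^t)-\frac c2\|\tilde x-x^t\|^2$, set $x^{t+1}=\tilde x$, $L_f^t=\tilde L_f$, $L_g^t=\tilde L_g$ and go to iteration $t+1$. Otherwise, if $g(\tilde x)\not\le0$ replace $\tilde L_g$ by $\tau\tilde L_g$, while if $g(\tilde x)\le0$ but the decrease inequality fails replace $\tilde L_f$ by $\tau\tilde L_f$; then repeat step (3) (these repetitions are the inner loop). The algorithm produces infinite sequences $\{x^t\},\{\xi^t\},\{L_f^t\},\{L_g^t\}$. A Lagrange multiplier of (S) is a vector $\lambda\in\mathbb R^m_+$ such that $\tilde x$ minimizes $x\mapsto\langle\nabla f(x^t)-\xi^t,x-x^t\rangle+\frac{\tilde L_f}{2}\|x-x^t\|^2+P_1(x)+\langle\lambda,\bar G(x,x^t,\tilde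 L_g)\rangle$ over $\mathbb R^n$ and $\lambda_i\bar G_i(\tilde x,x^t,\tilde L_g)=0$ for all $i$. *)

(* Defs.v *)
From Stdlib Require Import Reals.
From mathcomp Require Import ssreflect ssrfun ssrbool eqtype ssrnat fintype bigop.
Set Implicit Arguments. Unset Strict Implicit.
Open Scope R_scope.

Definition vec (n : nat) := 'I_n -> R.

Definition vadd {n} (x y : vec n) : vec n := fun i => x i + y i.
Definition vsub {n} (x y : vec n) : vec n := fun i => x i - y i.
Definition vscale {n} (a : R) (x : vec n) : vec n := fun i => a * x i.
Definition dot {n} (x y : vec n) : R := \big[Rplus/0]_(i < n) (x i * y i).
Definition norm {n} (x : vec n) : R := sqrt (dot x x).

Definition is_gradient {n} (f : vec n -> R) (gf : vec n -> vec n) : Prop :=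
  forall x eps, 0 < eps -> exists delta, 0 < delta /\
    forall h, norm h < delta ->
      Rabs (f (vadd x h) - f x - dot (gf x) h) <= eps * norm h.

Definition rcontinuous {n} (f : vec n -> R) : Prop :=
  forall x eps, 0 < eps -> exists delta, 0 < delta /\
    forall y, norm (vsub y x) < delta -> Rabs (f y - f x) < eps.

Definition vcontinuous {n k} (F : vec n -> vec k) : Prop :=
  forall x eps, 0 < eps -> exists delta, 0 < delta /\
    forall y, norm (vsub y x) < delta -> norm (vsub (F y) (F x)) < eps.

Definition lipschitz {n k} (F : vec n -> vec k) (L : R) : Prop :=
  forall x y, norm (vsub (F x) (F y)) <= L * norm (vsub x y).

Definition convex {n} (P : vec n -> R) : Prop :=
  forall x y a, 0 <= a <= 1 ->
    P (vadd (vscale a x) (vscale (1 - a) y)) <= a * P x + (1 - a) * P y.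

Definition subgrad {n} (P : vec n -> R) (x v : vec n) : Prop :=
  forall y, P x + dot v (vsub y x) <= P y.

Definition feasible {n m} (g : 'I_m -> vec n -> R) (x : vec n) : Prop :=
  forall i, g i x <= 0.

(* Finite part of F; F(x) = Fval x if g(x) <= 0, and +infinity otherwise. *)
Definition Fval {n} (f P1 P2 : vec n -> R) (x : vec n) : R := f x + P1 x - P2 x.

Definition level_bounded {n m} (f P1 P2 : vec n -> R) (g : 'I_m -> vec n -> R) : Prop :=
  forall a, exists B, forall x, feasible g x -> Fval f P1 P2 x <= a -> norm x <= B.

Definition MFCQ {n m} (g : 'I_m -> vec n -> R) (gradg : 'I_m -> vec n -> vec n) : Prop :=
  forall x, feasible g x -> exists d : vec n,
    forall i, g i x = 0 -> dot (gradg i x) d < 0.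

Definition Gbar {n m} (g : 'I_m -> vec n -> R) (gradg : 'I_m -> vec n -> vec n)
  (x y : vec n) (w : vec m) (i : 'I_m) : R :=
  g i y + dot (gradg i y) (vsub x y) + w i / 2 * (norm (vsub x y))^2.

Definition subobj {n} (gradf : vec n -> vec n) (P1 : vec n -> R)
  (xt xi : vec n) (Lf : R) (x : vec n) : R :=
  dot (vsub (gradf xt) xi) (vsub x xt) + Lf / 2 * (norm (vsub x xt))^2 + P1 x.

Definition Ssol {n m} (gradf : vec n -> vec n) (P1 : vec n -> R)
  (g : 'I_m -> vec n -> R) (gradg : 'I_m -> vec n -> vec n)
  (xt xi : vec n) (Lf : R) (Lg : vec m) (x : vec n) : Prop :=
  (forall i, Gbar g gradg x xt Lg i <= 0) /\
  forall y, (forall i, Gbar g gradg y xt Lg i <= 0) ->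
    subobj gradf P1 xt xi Lf x <= subobj gradf P1 xt xi Lf y.

Definition lagr {n m} (gradf : vec n -> vec n) (P1 : vec n -> R)
  (g : 'I_m -> vec n -> R) (gradg : 'I_m -> vec n -> vec n)
  (xt xi : vec n) (Lf : R) (Lg : vec m) (lam : vec m) (x : vec n) : R :=
  subobj gradf P1 xt xi Lf x + \big[Rplus/0]_(i < m) (lam i * Gbar g gradg x xt Lg i).

Definition is_multiplier {n m} (gradf : vec n -> vec n) (P1 : vec n -> R)
  (g : 'I_m -> vec n -> R) (gradg : 'I_m -> vec n -> vec n)
  (xt xi : vec n) (Lf : R) (Lg : vec m) (xs : vec n) (lam : vec m) : Prop :=
  (forall i, 0 <= lam i) /\
  (forall x, lagr gradf P1 g gradg xt xi Lf Lg lam xs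
             <= lagr gradf P1 g gradg xt xi Lf Lg lam x) /\
  (forall i, lam i * Gbar g gradg xs xt Lg i = 0).

Definition accepted {n m} (f P1 P2 : vec n -> R) (g : 'I_m -> vec n -> R)
  (c : R) (xt x : vec n) : Prop :=
  feasible g x /\ Fval f P1 P2 x <= Fval f P1 P2 xt - c / 2 * (norm (vsub x xt))^2.

(* trial f P1 P2 gradf g gradg c tau xt xi L0f L0g k Lf Lg :
   (Lf, Lg) is the trial pair used at inner iteration k (k = 0 first trial)
   of outer iteration with current point xt, subgradient xi and initial pair
   (L0f, L0g). *)
Inductive trial {n m} (f P1 P2 : vec n -> R) (gradf : vec n -> vec n)
  (g : 'I_m -> vec n -> R) (gradg : 'I_m -> vec n -> vec n) (c tau : R)
  (xt xi : vec n) (L0f : R) (L0g : vec m) : nat -> R -> vec m -> Prop :=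
| trial0 : trial f P1 P2 gradf g gradg c tau xt xi L0f L0g 0 L0f L0g
| trial_infeas : forall k Lf Lg x,
    trial f P1 P2 gradf g gradg c tau xt xi L0f L0g k Lf Lg ->
    Ssol gradf P1 g gradg xt xi Lf Lg x ->
    ~ feasible g x ->
    trial f P1 P2 gradf g gradg c tau xt xi L0f L0g (S k) Lf (vscale tau Lg)
| trial_nodecr : forall k Lf Lg x,
    trial f P1 P2 gradf g gradg c tau xt xi L0f L0g k Lf Lg ->
    Ssol gradf P1 g gradg xt xi Lf Lg x ->
    feasible g x ->
    ~ (Fval f P1 P2 x <= Fval f P1 P2 xt - c / 2 * (norm (vsub x xt))^2) ->
    trial f P1 P2 gradf g gradg c tau xt xi L0f L0g (S k) (tau * Lf) Lg.

(* reachable ... t xt : xt is a possible iterate x^t of SCP_ls started at x0,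
   for some admissible choices of xi^s in dP2(x^s) and of the initial pairs
   (L_f^{s,0}, L_g^{s,0}) in [Llo, Lhi] x [Llo, Lhi]^m, s < t. *)
Inductive reachable {n m} (f P1 P2 : vec n -> R) (gradf : vec n -> vec n)
  (g : 'I_m -> vec n -> R) (gradg : 'I_m -> vec n -> vec n) (c tau Llo Lhi : R)
  (x0 : vec n) : nat -> vec n -> Prop :=
| reach0 : reachable f P1 P2 gradf g gradg c tau Llo Lhi x0 0 x0
| reachS : forall t xt xi L0f L0g k Lf Lg x',
    reachable f P1 P2 gradf g gradg c tau Llo Lhi x0 t xt ->
    subgrad P2 xt xi ->
    Llo <= L0f <= Lhi ->
    (forall i, Llo <= L0g i <= Lhi) ->
    trial f P1 P2 gradf g gradg c tau xt xi L0f L0g k Lf Lg ->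
    Ssol gradf P1 g gradg xt xi Lf Lg x' ->
    accepted f P1 P2 g c xt x' ->
    reachable f P1 P2 gradf g gradg c tau Llo Lhi x0 (S t) x'.

(* Main.v *)
Require Import Defs.
From Stdlib Require Import Reals Lra Psatz FunctionalExtensionality IndefiniteDescription Classical.
From mathcomp Require Import ssreflect ssrfun ssrbool eqtype ssrnat seq fintype bigop.
Open Scope R_scope.
Set Implicit Arguments. Unset Strict Implicit.

Section Sums.
Variable I : Type.

Lemma sum_nil (F : I -> R) : \big[Rplus/0]_(i <- [::]) F i = 0.
Proof. by rewrite big_nil. Qed.
Lemma sum_cons (a : I) r (F : I -> R) :
  \big[Rplus/0]_(i <- a :: r) F i = F a + \big[Rplus/0]_(i <- r) F i.
Proof. by rewrite big_cons. Qed.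

Lemma sumD r (F G : I -> R) :
  \big[Rplus/0]_(i <- r) (F i + G i) = \big[Rplus/0]_(i <- r) F i + \big[Rplus/0]_(i <- r) G i.
Proof. elim: r => [|a r IH]; rewrite ?sum_nil ?sum_cons ?IH; lra. Qed.
Lemma sumB r (F G : I -> R) :
  \big[Rplus/0]_(i <- r) (F i - G i) = \big[Rplus/0]_(i <- r) F i - \big[Rplus/0]_(i <- r) G i.
Proof. elim: r => [|a r IH]; rewrite ?sum_nil ?sum_cons ?IH; lra. Qed.
Lemma sumZ r c (F : I -> R) :
  \big[Rplus/0]_(i <- r) (c * F i) = c * \big[Rplus/0]_(i <- r) F i.
Proof. elim: r => [|a r IH]; rewrite ?sum_nil ?sum_cons ?IH; ring. Qed.
Lemma sumZr r c (F : I -> R) :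
  \big[Rplus/0]_(i <- r) (F i * c) = (\big[Rplus/0]_(i <- r) F i) * c.
Proof. elim: r => [|a r IH]; rewrite ?sum_nil ?sum_cons ?IH; ring. Qed.
Lemma sum0 r : \big[Rplus/0]_(i <- r) (fun _ : I => 0) i = 0.
Proof. elim: r => [|a r IH]; rewrite ?sum_nil ?sum_cons ?IH /=; lra. Qed.
Lemma sum_ext r (F G : I -> R) : (forall i, F i = G i) ->
  \big[Rplus/0]_(i <- r) F i = \big[Rplus/0]_(i <- r) G i.
Proof. move=> H; elim: r => [|a r IH]; rewrite ?sum_nil ?sum_cons ?IH ?H //. Qed.
Lemma sum_le r (F G : I -> R) : (forall i, F i <= G i) ->
  \big[Rplus/0]_(i <- r) F i <= \big[Rplus/0]_(i <- r) G i.
Proof. move=> H; elim: r => [|a r IH]; rewrite ?sum_nil ?sum_cons; try lra.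
  have := H a; lra. Qed.
Lemma sum_ge0 r (F : I -> R) : (forall i, 0 <= F i) -> 0 <= \big[Rplus/0]_(i <- r) F i.
Proof. move=> H; elim: r => [|a r IH]; rewrite ?sum_nil ?sum_cons; try lra.
  have := H a; lra. Qed.
Lemma sum_cv r (F : nat -> I -> R) (l : I -> R) :
  (forall i, Un_cv (fun k => F k i) (l i)) ->
  Un_cv (fun k => \big[Rplus/0]_(i <- r) F k i) (\big[Rplus/0]_(i <- r) l i).
Proof.
move=> H; elim: r => [|a r IH].
  rewrite sum_nil; move=> e He; exists 0%nat => k _; rewrite sum_nil /R_dist.
  rewrite Rminus_0_r Rabs_R0; lra.
rewrite sum_cons.
have := CV_plus _ _ _ _ (H a) IH.
apply: Un_cv_ext => k; by rewrite sum_cons.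
Qed.
End Sums.
Lemma sum_exch (I J : Type) r (s : seq J) (F : I -> J -> R) :
  \big[Rplus/0]_(i <- r) \big[Rplus/0]_(j <- s) F i j =
  \big[Rplus/0]_(j <- s) \big[Rplus/0]_(i <- r) F i j.
Proof.
elim: r => [|a r IH]; rewrite ?sum_nil ?sum_cons.
  rewrite (@sum_ext _ s (fun j => \big[Rplus/0]_(i <- [::]) F i j) (fun _ => 0)) ?sum0 // => j; by rewrite sum_nil.
rewrite IH -sumD; apply: sum_ext => j; by rewrite sum_cons.
Qed.

Section SumsEq.
Variable I : eqType.
Lemma sum_term_le r (F : I -> R) i : (forall j, 0 <= F j) -> i \in r ->
  F i <= \big[Rplus/0]_(j <- r) F j.
Proof.
move=> H; elim: r => [|a r IH] //=; rewrite in_cons sum_cons => /orP [/eqP->|Hi].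
  have := sum_ge0 r H; lra.
have := IH Hi; have := H a; lra.
Qed.
End SumsEq.
Section Vec.
Variable n : nat.
Implicit Types x y z : vec n.

Lemma dot_comm x y : dot x y = dot y x.
Proof. rewrite /dot; apply: sum_ext => i; ring. Qed.
Lemma dot_addl x y z : dot (vadd x y) z = dot x z + dot y z.
Proof. rewrite /dot -sumD; apply: sum_ext => i; rewrite /vadd; ring. Qed.
Lemma dot_addr x y z : dot z (vadd x y) = dot z x + dot z y.
Proof. rewrite /dot -sumD; apply: sum_ext => i; rewrite /vadd; ring. Qed.
Lemma dot_subl x y z : dot (vsub x y) z = dot x z - dot y z.
Proof. rewrite /dot -sumB; apply: sum_ext => i; rewrite /vsub; ring. Qed.
Lemma dot_subr x y z : dot z (vsub x y) = dot z x - dot z y.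
Proof. rewrite /dot -sumB; apply: sum_ext => i; rewrite /vsub; ring. Qed.
Lemma dot_scalel a x y : dot (vscale a x) y = a * dot x y.
Proof. rewrite /dot -sumZ; apply: sum_ext => i; rewrite /vscale; ring. Qed.
Lemma dot_scaler a x y : dot y (vscale a x) = a * dot y x.
Proof. rewrite /dot -sumZ; apply: sum_ext => i; rewrite /vscale; ring. Qed.
Lemma dot_ge0 x : 0 <= dot x x.
Proof. apply: sum_ge0 => i; nra. Qed.
Lemma norm_ge0 x : 0 <= norm x.
Proof. exact: sqrt_pos. Qed.
Lemma norm_sq x : (norm x)^2 = dot x x.
Proof. rewrite /norm /= Rmult_1_r sqrt_sqrt //; exact: dot_ge0. Qed.
Lemma norm_sq' x : norm x * norm x = dot x x.
Proof. rewrite -norm_sq /=; ring. Qed.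
Lemma dot_eq0 x : dot x x = 0 -> forall i, x i = 0.
Proof.
move=> H i; have := @sum_term_le _ (index_enum 'I_n) (fun j => x j * x j) i.
rewrite mem_index_enum -/(dot x x) H => /(_ (fun j => ltac:(nra)) isT) Hi.
nra.
Qed.
Lemma coord_le x i : Rabs (x i) <= norm x.
Proof.
rewrite -(sqrt_Rsqr_abs (x i)); apply: sqrt_le_1_alt.
have := @sum_term_le _ (index_enum 'I_n) (fun j => x j * x j) i.
rewrite mem_index_enum /Rsqr => /(_ (fun j => ltac:(nra)) isT); done.
Qed.

Lemma sqrt_sum_le (I : Type) (r : seq I) (F : I -> R) :
  sqrt (\big[Rplus/0]_(i <- r) (F i * F i)) <= \big[Rplus/0]_(i <- r) Rabs (F i).
Proof.
elim: r => [|a r IH]; rewrite ?sum_nil ?sum_cons ?sqrt_0; try lra.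
have H0 : 0 <= \big[Rplus/0]_(i <- r) (F i * F i) by apply: sum_ge0 => i; nra.
have Hs := sqrt_pos (\big[Rplus/0]_(i <- r) (F i * F i)).
have Hss := sqrt_sqrt _ H0.
have Ha := Rabs_pos (F a).
have Haa : Rabs (F a) * Rabs (F a) = F a * F a by rewrite -Rabs_mult Rabs_right; nra.
apply: Rle_trans (_ : Rabs (F a) + sqrt (\big[Rplus/0]_(i <- r) (F i * F i)) <= _); last lra.
rewrite -(sqrt_square (Rabs (F a) + sqrt (\big[Rplus/0]_(i <- r) (F i * F i)))); last lra.
apply: sqrt_le_1_alt; nra.
Qed.

Lemma norm_le_sumabs x : norm x <= \big[Rplus/0]_(i < n) Rabs (x i).
Proof. exact: sqrt_sum_le. Qed.

Lemma CS2 x y : (dot x y)^2 <= dot x x * dot y y.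
Proof.
have Hq : forall t, 0 <= dot x x * (t*t) + 2 * t * dot x y + dot y y.
  move=> t; have := dot_ge0 (vadd (vscale t x) y).
  rewrite !dot_addl !dot_addr !dot_scalel !dot_scaler (dot_comm y x); nra.
have Hx := dot_ge0 x; have Hy := dot_ge0 y.
case: (Req_dec (dot x x) 0) => Hx0.
  case: (Req_dec (dot x y) 0) => Hxy; first by rewrite Hxy Hx0; nra.
  have := Hq (- (dot y y + 1) / (2 * dot x y)). rewrite Hx0.
  have -> : 2 * (- (dot y y + 1) / (2 * dot x y)) * dot x y = - (dot y y + 1) by field.
  lra.
have Hxp : 0 < dot x x by lra.
have := Hq (- dot x y / dot x x).
move=> H. have H2 : 0 <= dot y y - (dot x y)^2 / dot x x.
  have -> : dot y y - (dot x y)^2 / dot x x =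
    dot x x * (- dot x y / dot x x * (- dot x y / dot x x)) + 2 * (- dot x y / dot x x) * dot x y + dot y y by field; lra.
  exact: H.
have : (dot x y)^2 / dot x x * dot x x = (dot x y)^2 by field; lra.
nra.
Qed.

Lemma CS x y : Rabs (dot x y) <= norm x * norm y.
Proof.
have := CS2 x y; rewrite -!norm_sq' => H.
have := norm_ge0 x; have := norm_ge0 y => h1 h2.
apply: Rsqr_incr_0_var; rewrite /Rsqr; try nra.
rewrite -Rabs_mult Rabs_right; nra.
Qed.
Lemma dot_le x y : dot x y <= norm x * norm y.
Proof. have := CS x y; have := Rle_abs (dot x y); lra. Qed.

Lemma norm_scale a x : norm (vscale a x) = Rabs a * norm x.
Proof.
rewrite /norm dot_scalel dot_scaler -Rmult_assoc sqrt_mult_alt.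
  by rewrite -(sqrt_Rsqr_abs a) /Rsqr.
nra.
Qed.
Lemma norm_add x y : norm (vadd x y) <= norm x + norm y.
Proof.
have h1 := norm_ge0 x; have h2 := norm_ge0 y; have h3 := norm_ge0 (vadd x y).
apply: Rsqr_incr_0_var; rewrite /Rsqr; try nra.
rewrite !norm_sq' dot_addl !dot_addr (dot_comm y x) -!norm_sq'.
have := dot_le x y; nra.
Qed.
Lemma norm_tri x y z : norm (vsub x z) <= norm (vsub x y) + norm (vsub y z).
Proof.
have -> : vsub x z = vadd (vsub x y) (vsub y z).
  apply: functional_extensionality => i; rewrite /vsub /vadd; ring.
exact: norm_add.
Qed.
Lemma norm_sym x y : norm (vsub x y) = norm (vsub y x).
Proof.
have -> : vsub x y = vscale (-1) (vsub y x).
  apply: functional_extensionality => i; rewrite /vsub /vscale; ring.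
rewrite norm_scale Rabs_Ropp Rabs_R1; ring.
Qed.
Lemma norm_eq0 x y : norm (vsub x y) = 0 -> x = y.
Proof.
move=> H; apply: functional_extensionality => i.
have H2 : dot (vsub x y) (vsub x y) = 0 by rewrite -norm_sq H /=; ring.
have := dot_eq0 H2 i; rewrite /vsub; lra.
Qed.
End Vec.
Definition conv n (u : nat -> vec n) (y : vec n) :=
  forall e, 0 < e -> exists N, forall k, (N <= k)%N -> norm (vsub (u k) y) < e.

Lemma inv_small a : 0 < a -> exists N, forall k, (N <= k)%N -> / (INR k + 1) < a.
Proof.
move=> Ha; have [N [HN HN1]] := archimed_cor1 a Ha; exists N => k /leP Hk.
have h1 := le_INR _ _ Hk; have HN0 := lt_0_INR _ HN1.
apply: Rle_lt_trans HN; apply: Rinv_le_contravar; lra.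
Qed.

Lemma complete n (u : nat -> vec n) :
  (forall e, 0 < e -> exists N, forall p q, (N <= p)%N -> (N <= q)%N -> norm (vsub (u p) (u q)) < e) ->
  exists y, conv u y.
Proof.
move=> H.
have Hc : forall i, Cauchy_crit (fun k => u k i).
  move=> i e He; have [N HN] := H e He; exists N => p q Hp Hq; rewrite /R_dist.
  apply: Rle_lt_trans (HN p q _ _); last by apply/leP. 2: by apply/leP.
  exact: (coord_le (vsub (u p) (u q)) i).
exists (fun i => proj1_sig (R_complete _ (Hc i))).
set y := fun i => _.
have Hy : forall i, Un_cv (fun k => u k i) (y i) := fun i => proj2_sig (R_complete _ (Hc i)).
have Hs := sum_cv (index_enum 'I_n) (F:=fun k i => Rabs (u k i - y i)) (l:=fun _ => 0).
have Hs' : Un_cv (fun k => \big[Rplus/0]_(i <- index_enum 'I_n) Rabs (u k i - y i)) 0.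
  have Hz : forall i, Un_cv (fun k => Rabs (u k i - y i)) 0.
    move=> i e He.
    have [N HN] := Hy i e He; exists N => k Hk; have := HN k Hk.
    by rewrite /R_dist Rminus_0_r Rabs_Rabsolu.
  have := Hs Hz; by rewrite sum0.
move=> e He; have [N HN] := Hs' e He; exists N => k /leP Hk.
have := HN k Hk; rewrite /R_dist Rminus_0_r => h.
apply: Rle_lt_trans (Rle_trans _ _ _ _ (Rle_abs _)) h.
exact: (norm_le_sumabs (vsub (u k) y)).
Qed.

Lemma rcont_conv n (F : vec n -> R) u y : rcontinuous F -> conv u y ->
  Un_cv (fun k => F (u k)) (F y).
Proof.
move=> HF Hu e He; have [d [Hd Hd']] := HF y e He.
have [N HN] := Hu d Hd; exists N => k Hk; rewrite /R_dist.
apply: Hd'; apply: HN; exact/leP.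
Qed.

Section Cont.
Variable n : nat.
Lemma rcont_const c : rcontinuous (fun _ : vec n => c).
Proof. move=> x e He; exists 1; split; first lra; move=> y _; rewrite Rminus_diag Rabs_R0 //. Qed.
Lemma rcont_coord i : rcontinuous (fun x : vec n => x i).
Proof. move=> x e He; exists e; split => // y Hy; exact: Rle_lt_trans (coord_le (vsub y x) i) Hy. Qed.
Lemma rcont_plus (F G : vec n -> R) : rcontinuous F -> rcontinuous G -> rcontinuous (fun x => F x + G x).
Proof.
move=> HF HG x e He; have [d1 [H1 H1']] := HF x (e/2) ltac:(lra).
have [d2 [H2 H2']] := HG x (e/2) ltac:(lra).
exists (Rmin d1 d2); split; first exact: Rmin_pos.
move=> y Hy; have := H1' y (Rlt_le_trans _ _ _ Hy (Rmin_l _ _)).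
have := H2' y (Rlt_le_trans _ _ _ Hy (Rmin_r _ _)) => a b.
have -> : F y + G y - (F x + G x) = (F y - F x) + (G y - G x) by ring.
apply: Rle_lt_trans (Rabs_triang _ _) _; lra.
Qed.
Lemma rcont_mul (F G : vec n -> R) : rcontinuous F -> rcontinuous G -> rcontinuous (fun x => F x * G x).
Proof.
move=> HF HG x e He.
set a := Rabs (F x); set b := Rabs (G x).
have ha : 0 <= a := Rabs_pos _. have hb : 0 <= b := Rabs_pos _.
set eta := Rmin 1 (e / (a + b + 1)).
have Heta : 0 < eta by apply: Rmin_pos; [lra| apply: Rdiv_lt_0_compat; lra].
have Heta1 : eta <= 1 := Rmin_l _ _.
have Heta2 : eta * (a + b + 1) <= e.
  have := Rmin_r 1 (e / (a + b + 1)); rewrite -/eta => h.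
  have -> : e = e / (a + b + 1) * (a + b + 1) by field; lra.
  apply: Rmult_le_compat_r; lra.
have [d1 [H1 H1']] := HF x eta Heta; have [d2 [H2 H2']] := HG x eta Heta.
exists (Rmin d1 d2); split; first exact: Rmin_pos.
move=> y Hy; have A := H1' y (Rlt_le_trans _ _ _ Hy (Rmin_l _ _)).
have B := H2' y (Rlt_le_trans _ _ _ Hy (Rmin_r _ _)).
have -> : F y * G y - F x * G x = (F y - F x) * (G y - G x) + (F y - F x) * G x + F x * (G y - G x) by ring.
apply: Rle_lt_trans (Rabs_triang _ _) _.
apply: Rle_lt_trans (Rplus_le_compat_r _ _ _ (Rabs_triang _ _)) _.
rewrite !Rabs_mult -/a -/b.
have h1 := Rabs_pos (F y - F x); have h2 := Rabs_pos (G y - G x).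
nra.
Qed.
Lemma rcont_sum (I : Type) (r : seq I) (F : I -> vec n -> R) :
  (forall i, rcontinuous (F i)) -> rcontinuous (fun x => \big[Rplus/0]_(i <- r) F i x).
Proof.
move=> H; elim: r => [|a r IH].
  move=> x e He; exists 1; split; first lra; move=> y _; rewrite !sum_nil Rminus_diag Rabs_R0 //.
have := rcont_plus (H a) IH.
move=> Hc x e He; have [d [Hd Hd']] := Hc x e He; exists d; split => // y Hy.
rewrite !sum_cons; exact: Hd'.
Qed.
Lemma rcont_max0 (F : vec n -> R) : rcontinuous F -> rcontinuous (fun x => Rmax 0 (F x)).
Proof.
move=> HF x e He; have [d [Hd Hd']] := HF x e He; exists d; split => // y Hy.
apply: Rle_lt_trans (Hd' y Hy).
rewrite /Rmax; case: Rle_dec; case: Rle_dec => h1 h2; rewrite ?Rminus_diag ?Rabs_R0;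
  try apply: Rabs_pos; rewrite /Rabs; repeat case: Rcase_abs; lra.
Qed.
Lemma rcont_ext (F G : vec n -> R) : (forall x, F x = G x) -> rcontinuous F -> rcontinuous G.
Proof. move=> E H x e He; have [d [Hd Hd']] := H x e He; exists d; split => // y; rewrite -!E; exact: Hd'. Qed.
Lemma rcont_dot c z : rcontinuous (fun x : vec n => dot c (vsub x z)).
Proof.
apply: rcont_sum => i; apply: rcont_mul; first exact: rcont_const.
apply: (rcont_ext (F := fun x => x i + (- z i))); first by move=> x; rewrite /vsub.
apply: rcont_plus; [exact: rcont_coord| exact: rcont_const].
Qed.
Lemma rcont_nsq z : rcontinuous (fun x : vec n => (norm (vsub x z))^2).
Proof.
apply: (rcont_ext (F := fun x => dot (vsub x z) (vsub x z))); first by move=> x; rewrite norm_sq.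
apply: rcont_sum => i; apply: rcont_mul;
apply: (rcont_ext (F := fun x => x i + (- z i))); try (by move=> x; rewrite /vsub);
apply: rcont_plus; try exact: rcont_coord; exact: rcont_const.
Qed.
End Cont.
Definition cc n (a : R) (x y : vec n) : vec n := vadd (vscale a x) (vscale (1 - a) y).
Definition mid n (x y : vec n) : vec n := cc (/2) x y.

Lemma minimize n (S : vec n -> Prop) (phi : vec n -> R) (mu lb : R) (x0 : vec n) :
  S x0 -> 0 < mu ->
  (forall u y, (forall k, S (u k)) -> conv u y -> S y) ->
  (forall x y, S x -> S y -> S (mid x y)) ->
  rcontinuous phi ->
  (forall x, S x -> lb <= phi x) ->
  (forall x y, S x -> S y -> phi (mid x y) <= (phi x + phi y)/2 - mu/8 * (norm (vsub x y))^2) ->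
  exists z, S z /\ forall x, S x -> phi z <= phi x.
Proof.
move=> Hx0 Hmu Hcl Hmid Hc Hlb Hsc.
pose E r := exists x, S x /\ r = - phi x.
have HEb : bound E by exists (- lb) => r [x [Hx ->]]; have := Hlb x Hx; lra.
have HEn : exists r, E r by exists (- phi x0); exists x0.
have [M [HM1 HM2]] := completeness E HEb HEn.
have Hinf : forall x, S x -> - M <= phi x.
  move=> x Hx; have : - phi x <= M by apply: HM1; exists x. lra.
have Hex : forall k : nat, exists x, S x /\ phi x < - M + / (INR k + 1).
  move=> k; apply: NNPP => Hn.
  have Hk : 0 < / (INR k + 1) by apply: Rinv_0_lt_compat; have := pos_INR k; lra.
  have : M <= M - / (INR k + 1); last lra.
  apply: HM2 => r [x [Hx ->]].
  apply: Rnot_lt_le => Hlt; apply: Hn; exists x; split => //; lra.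
have [u Hu] := functional_choice _ Hex.
have Hcauchy : forall e, 0 < e -> exists N, forall p q, (N <= p)%N -> (N <= q)%N -> norm (vsub (u p) (u q)) < e.
  move=> e He.
  have Ha : 0 < mu * (e * e) / 8 by apply: Rdiv_lt_0_compat; [apply: Rmult_lt_0_compat; nra|lra].
  have [N HN] := inv_small Ha.
  exists N => p q Hp Hq.
  have [Sp hp] := Hu p; have [Sq hq] := Hu q.
  have hm := Hinf _ (Hmid _ _ Sp Sq). have hs := Hsc _ _ Sp Sq.
  have hN := HN N (leqnn N).
  have ip : / (INR p + 1) <= / (INR N + 1).
    apply: Rinv_le_contravar; first by have := pos_INR N; lra.
    have := le_INR _ _ (elimT leP Hp); lra.
  have iq : / (INR q + 1) <= / (INR N + 1).
    apply: Rinv_le_contravar; first by have := pos_INR N; lra.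
    have := le_INR _ _ (elimT leP Hq); lra.
  have h0 := norm_ge0 (vsub (u p) (u q)).
  have : mu / 8 * norm (vsub (u p) (u q)) ^ 2 < mu * (e * e) / 8 by lra.
  move=> h; apply: Rnot_le_lt => Hle.
  have : mu / 8 * (e * e) <= mu / 8 * norm (vsub (u p) (u q)) ^ 2.
    apply: Rmult_le_compat_l; first lra. simpl; nra.
  lra.
have [y Hy] := complete Hcauchy.
have Sy : S y by apply: (Hcl u) => // k; case: (Hu k).
exists y; split => // x Hx.
apply: Rle_trans (Hinf x Hx).
apply: Rnot_lt_le => Hlt.
set d := phi y - - M.
have Hd : 0 < d / 2 by rewrite /d; lra.
have [N1 HN1] := rcont_conv Hc Hy Hd.
have [N2 HN2] := inv_small Hd.
set k := maxn N1 N2.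
have := HN1 k (elimT leP (leq_maxl N1 N2)); rewrite /R_dist => h1.
have := HN2 k (leq_maxr N1 N2) => h2.
have [_ h3] := Hu k.
have := Rle_abs (phi y - phi (u k)); rewrite Rabs_minus_sym; rewrite /d in h1 h2 Hd; lra.
Qed.
Definition line n (x d : vec n) (s : R) : vec n := vadd x (vscale s d).

Lemma deriv_line n (F : vec n -> R) gF x d s : is_gradient F gF ->
  derivable_pt_lim (fun s => F (line x d s)) s (dot (gF (line x d s)) d).
Proof.
move=> HF e He.
set p := line x d s.
have Hnd := norm_ge0 d.
have He2 : 0 < e / 2 / (norm d + 1) by apply: Rdiv_lt_0_compat; lra.
have [del [Hdel Hdel']] := HF p _ He2.
have Hdp : 0 < del / (norm d + 1) by apply: Rdiv_lt_0_compat; lra.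
exists (mkposreal _ Hdp) => h Hh0 Hh /=.
have E : line x d (s + h) = vadd p (vscale h d).
  apply: functional_extensionality => i; rewrite /p /line /vadd /vscale; ring.
rewrite E.
have Hah : 0 < Rabs h by apply: Rabs_pos_lt.
have Hn : norm (vscale h d) < del.
  rewrite norm_scale; simpl in Hh.
  have : Rabs h * (norm d + 1) < del.
    have -> : del = del / (norm d + 1) * (norm d + 1) by field; lra.
    apply: Rmult_lt_compat_r; lra.
  nra.
have := Hdel' _ Hn; rewrite dot_scaler norm_scale => HA.
set D := dot (gF p) d in HA *.
have -> : (F (vadd p (vscale h d)) - F p) / h - D = (F (vadd p (vscale h d)) - F p - h * D) / h by field.
rewrite /Rdiv Rabs_mult Rabs_inv.
apply: (Rmult_lt_reg_r (Rabs h)) => //.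
rewrite Rmult_assoc Rinv_l; last lra.
rewrite Rmult_1_r.
apply: Rle_lt_trans HA _.
have : e / 2 / (norm d + 1) * (norm d + 1) = e / 2 by field; lra.
move=> Heq.
have : e / 2 / (norm d + 1) * (Rabs h * norm d) <= e / 2 / (norm d + 1) * (Rabs h * (norm d + 1)).
  apply: Rmult_le_compat_l; nra.
nra.
Qed.

Lemma deriv_quad A B s : derivable_pt_lim (fun s => A * s + B * (s * s)) s (A + 2 * B * s).
Proof.
move=> e He.
have Hb : 0 < e / (Rabs B + 1) by apply: Rdiv_lt_0_compat; have := Rabs_pos B; lra.
exists (mkposreal _ Hb) => h Hh0 Hh /=; simpl in Hh.
have -> : (A * (s + h) + B * ((s + h) * (s + h)) - (A * s + B * (s * s))) / h - (A + 2 * B * s) = B * h by field.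
rewrite Rabs_mult.
have HB := Rabs_pos B.
have : Rabs h * (Rabs B + 1) < e.
  have -> : e = e / (Rabs B + 1) * (Rabs B + 1) by field; lra.
  apply: Rmult_lt_compat_r; lra.
have := Rabs_pos h; nra.
Qed.

Lemma descent n (F : vec n -> R) gF L x y : is_gradient F gF -> lipschitz gF L ->
  F y <= F x + dot (gF x) (vsub y x) + L / 2 * (norm (vsub y x))^2.
Proof.
move=> HF HL.
set d := vsub y x. set A := dot (gF x) d. set Q := (norm d)^2.
pose phi s := F (line x d s) - (F x + (A * s + L / 2 * Q * (s * s))).
have Hd : forall s, derivable_pt_lim phi s (dot (gF (line x d s)) d - (0 + (A + 2 * (L / 2 * Q) * s))).
  move=> s.
  have := derivable_pt_lim_minus _ _ s _ _ (deriv_line x d s HF)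
            (derivable_pt_lim_plus _ _ s _ _ (derivable_pt_lim_const (F x) s) (deriv_quad A (L / 2 * Q) s)).
  by [].
pose pr := fun s => exist (fun l => derivable_pt_lim phi s l) _ (Hd s).
have [c [Hc1 Hc2]] := MVT_cor1 phi 0 1 pr ltac:(lra).
rewrite (derive_pt_eq_0 _ _ _ _ (Hd c)) in Hc1.
have E0 : line x d 0 = x by apply: functional_extensionality => i; rewrite /line /vadd /vscale; ring.
have E1 : line x d 1 = y by apply: functional_extensionality => i; rewrite /line /vadd /vscale /d /vsub; ring.
have Ec : vsub (line x d c) x = vscale c d by apply: functional_extensionality => i; rewrite /line /vadd /vscale /vsub; ring.
have Hder : dot (gF (line x d c)) d - A <= L * c * Q.
  have -> : dot (gF (line x d c)) d - A = dot (vsub (gF (line x d c)) (gF x)) d by rewrite dot_subl.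
  apply: Rle_trans (dot_le _ _) _.
  have := HL (line x d c) x; rewrite Ec norm_scale Rabs_right; last lra.
  move=> h; have hd := norm_ge0 d.
  have := Rmult_le_compat_r _ _ _ hd h. rewrite /Q /=; nra.
move: Hc1; rewrite /phi E0 E1; lra.
Qed.
Ltac dexp := repeat (first [rewrite dot_subl|rewrite dot_subr|rewrite dot_addl|rewrite dot_addr|rewrite dot_scalel|rewrite dot_scaler]).
Section Quad.
Variable n : nat.
Implicit Types x y z c : vec n.

Lemma nsq_cc a x y z : (norm (vsub (cc a x y) z))^2 =
  a * (norm (vsub x z))^2 + (1 - a) * (norm (vsub y z))^2 - a * (1 - a) * (norm (vsub x y))^2.
Proof.
rewrite !norm_sq /cc; dexp; rewrite (dot_comm y x) (dot_comm z x) (dot_comm z y); ring.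
Qed.
Lemma dot_cc c a x y z : dot c (vsub (cc a x y) z) = a * dot c (vsub x z) + (1 - a) * dot c (vsub y z).
Proof. rewrite /cc; dexp; ring. Qed.

Definition Qf c (w : R) x0 x := dot c (vsub x x0) + w / 2 * (norm (vsub x x0))^2.
Lemma Q_cc c w x0 a x y : Qf c w x0 (cc a x y) =
  a * Qf c w x0 x + (1 - a) * Qf c w x0 y - w / 2 * (a * (1 - a)) * (norm (vsub x y))^2.
Proof. rewrite /Qf dot_cc nsq_cc; ring. Qed.

Lemma vsub_cc a x z : vsub (cc a x z) z = vscale a (vsub x z).
Proof. apply: functional_extensionality => i; rewrite /cc /vsub /vadd /vscale; ring. Qed.

Lemma conv_lb (P : vec n -> R) x0 : convex P -> rcontinuous P ->
  exists K, 0 < K /\ forall x, P x0 - 1 - K * norm (vsub x x0) <= P x.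
Proof.
move=> Hc Hr; have [d [Hd Hd']] := Hr x0 1 ltac:(lra).
exists (2 / d); split; first by apply: Rdiv_lt_0_compat; lra.
move=> x; set r := norm (vsub x x0).
have Hr0 : 0 <= r := norm_ge0 _.
have HK : 0 <= 2 / d * r by apply: Rmult_le_pos => //; apply: Rlt_le; apply: Rdiv_lt_0_compat; lra.
case: (Rle_lt_dec r (d / 2)) => Hrd.
  have := Hd' x ltac:(rewrite -/r; lra); move/Rabs_def2 => [_ h]; lra.
set a := d / (2 * r).
have Ha : 0 < a by apply: Rdiv_lt_0_compat; lra.
have Ha1 : a <= 1.
  rewrite /a; apply: (Rmult_le_reg_r (2 * r)); first lra.
  rewrite /Rdiv Rmult_assoc Rinv_l; lra.
have Hz : norm (vsub (cc a x x0) x0) < d.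
  rewrite vsub_cc norm_scale Rabs_right -/r; last lra.
  have -> : a * r = d / 2 by rewrite /a; field; lra.
  lra.
have := Hd' _ Hz; move/Rabs_def2 => [_ h].
have hc : P (cc a x x0) <= a * P x + (1 - a) * P x0 := Hc x x0 a ltac:(lra).
have Hak : a * (2 / d * r) = 1 by rewrite /a; field; split; lra.
have : a * (P x - P x0) > a * (- (2 / d * r)).
  have -> : a * (P x - P x0) = (a * P x + (1 - a) * P x0) - P x0 by ring.
  have -> : a * (- (2 / d * r)) = -1 by rewrite Ropp_mult_distr_r_reverse Hak.
  lra.
move=> h2; have := Rmult_lt_reg_l _ _ _ Ha h2; lra.
Qed.
End Quad.
Lemma lim0 T K : 0 <= K -> (forall a, 0 < a <= 1 -> 0 <= a * T + a * a * K) -> 0 <= T.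
Proof.
move=> HK H; apply: Rnot_lt_le => HT.
set a := Rmin 1 (- T / (2 * (K + 1))).
have Ha : 0 < a by apply: Rmin_pos; [lra| apply: Rdiv_lt_0_compat; lra].
have Ha1 : a <= 1 := Rmin_l _ _.
have Ha2 : a <= - T / (2 * (K + 1)) := Rmin_r _ _.
have : a * (2 * (K + 1)) <= - T.
  have -> : - T = - T / (2 * (K + 1)) * (2 * (K + 1)) by field; lra.
  apply: Rmult_le_compat_r; lra.
move=> h; have := H a (conj Ha Ha1). nra.
Qed.

Lemma aux_sq u v w : 0 <= u <= (v + w) / 2 -> 0 <= v -> 0 <= w -> u*u <= (v*v+w*w)/2.
Proof.
intros H1 H2 H3. assert (H4: u*u <= ((v+w)/2)*((v+w)/2)) by (apply Rmult_le_compat; lra).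
assert (E: ((v+w)/2)*((v+w)/2) = (v*v+w*w)/2 - (v-w)*(v-w)/4) by field. rewrite E in H4.
assert (0 <= (v-w)*(v-w)) by (apply Rle_0_sqr). lra.
Qed.

Lemma pen_mid u v w : u <= (v + w) / 2 ->
  Rmax 0 u * Rmax 0 u <= (Rmax 0 v * Rmax 0 v + Rmax 0 w * Rmax 0 w) / 2.
Proof.
move=> H; apply: aux_sq; try apply: Rmax_l.
split; first exact: Rmax_l.
have := Rmax_l 0 v; have := Rmax_r 0 v; have := Rmax_l 0 w; have := Rmax_r 0 w => *.
apply: Rmax_lub; lra.
Qed.

Lemma pen_bound u v a d : 0 <= a -> u <= v + a * d ->
  Rmax 0 u * Rmax 0 u <= Rmax 0 v * Rmax 0 v + 2 * a * (Rmax 0 v * d) + a * a * (d * d).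
Proof.
move=> Ha H.
have E : forall V, V * V + 2 * a * (V * d) + a * a * (d * d) = (V + a * d) * (V + a * d) by move=> V; ring.
rewrite E.
have Hu : Rmax 0 u <= Rmax 0 (v + a * d).
  apply: Rmax_lub; first exact: Rmax_l. apply: Rle_trans H (Rmax_r _ _).
have Hv : Rmax 0 (v + a * d) <= Rmax 0 v + a * d \/ v + a * d <= 0.
  rewrite /Rmax; case: Rle_dec; case: Rle_dec => h1 h2; lra.
have H0 := Rmax_l 0 u.
case: Hv => Hv.
  apply: Rmult_le_compat; lra.
have : Rmax 0 (v + a * d) = 0 by rewrite /Rmax; case: Rle_dec => h; lra.
move=> E0; rewrite E0 in Hu; have : Rmax 0 u = 0 by lra.
move=> ->; rewrite Rmult_0_l; apply: Rle_0_sqr.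
Qed.

Lemma lim_ge v l c : Un_cv v l -> (forall k, c <= v k) -> c <= l.
Proof.
move=> Hv Hc; apply: Rnot_lt_le => Hl.
have [N HN] := Hv (c - l) ltac:(lra).
have := HN N (le_n N); rewrite /R_dist => h.
have := Hc N; have := Rle_abs (v N - l); lra.
Qed.

Lemma finite_min m (s : 'I_m -> R) : (forall i, 0 < s i) -> exists t, 0 < t /\ forall i, t <= s i.
Proof.
move=> H.
suff : forall r : seq 'I_m, exists t, 0 < t /\ forall i, i \in r -> t <= s i.
  move=> /(_ (index_enum 'I_m)) [t [Ht Ht']]; exists t; split => // i; apply: Ht'; exact: mem_index_enum.
elim => [|a r [t [Ht Ht']]]; first by exists 1; split => //; lra.
exists (Rmin t (s a)); split; first by apply: Rmin_pos => //.
move=> i; rewrite in_cons => /orP [/eqP ->|Hi]; first exact: Rmin_r.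
apply: Rle_trans (Rmin_l _ _) _; exact: Ht'.
Qed.

Lemma sum_ge0_le0_eq (I : eqType) (r : seq I) (F : I -> R) :
  (forall i, F i <= 0) -> 0 <= \big[Rplus/0]_(i <- r) F i -> forall i, i \in r -> F i = 0.
Proof.
move=> H Hs i Hi.
have := @sum_term_le _ r (fun j => - F j) i (fun j => ltac:(have := H j; lra)) Hi.
have -> : \big[Rplus/0]_(j <- r) - F j = - \big[Rplus/0]_(j <- r) F j.
  rewrite -(Rmult_1_l (\big[Rplus/0]_(j <- r) F j)) Ropp_mult_distr_l -sumZ.
  apply: sum_ext => j; ring.
have := H i; lra.
Qed.
Section KKT.
Variables (n m : nat) (phi : vec n -> R) (G : 'I_m -> vec n -> R) (mu lb : R) (xs xh : vec n).
Hypotheses (Hmu : 0 < mu)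
 (Hphi : forall a x y, 0 <= a <= 1 ->
    phi (cc a x y) <= a * phi x + (1 - a) * phi y - mu / 2 * (a * (1 - a)) * (norm (vsub x y))^2)
 (HG : forall i a x y, 0 <= a <= 1 -> G i (cc a x y) <= a * G i x + (1 - a) * G i y)
 (Hphic : rcontinuous phi) (HGc : forall i, rcontinuous (G i))
 (Hlb : forall x, lb <= phi x)
 (Hxs : forall i, G i xs <= 0)
 (Hopt : forall x, (forall i, G i x <= 0) -> phi xs <= phi x)
 (Hxh : forall i, G i xh < 0).

Lemma phi_conv a x y : 0 <= a <= 1 -> phi (cc a x y) <= a * phi x + (1 - a) * phi y.
Proof.
move=> Ha; apply: Rle_trans (Hphi x y Ha) _.
have : 0 <= mu / 2 * (a * (1 - a)) * (norm (vsub x y))^2.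
  apply: Rmult_le_pos; last by simpl; have := norm_ge0 (vsub x y); nra.
  apply: Rmult_le_pos; nra.
lra.
Qed.

Definition pen (x : vec n) := \big[Rplus/0]_(i < m) (Rmax 0 (G i x) * Rmax 0 (G i x)).
Lemma pen_ge0 x : 0 <= pen x.
Proof. apply: sum_ge0 => i; have := Rmax_l 0 (G i x); nra. Qed.

Lemma penalty_step eps : 0 < eps -> exists lam : vec m, (forall i, 0 <= lam i) /\
  forall x, phi xs - eps <= phi x + \big[Rplus/0]_(i < m) (lam i * G i x).
Proof.
move=> Heps.
set p := phi xs.
have [s [Hs Hs']] := finite_min (s := fun i => - G i xh) (fun i => ltac:(have := Hxh i; lra)).
set ph := phi xh.
have Hph : p <= ph by apply: Hopt => i; have := Hxh i; lra.
set del := eps * s / (ph - p + 1).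
have Hdel : 0 < del by apply: Rdiv_lt_0_compat; [nra|lra].
have Hplb : lb <= p := Hlb xs.
set rho := 2 * (p - lb + 1) / (del * del).
have Hrho : 0 < rho by apply: Rdiv_lt_0_compat; nra.
set psi := fun x => phi x + rho / 2 * pen x.
have [xr [_ Hxr]] : exists z, True /\ forall x, True -> psi z <= psi x.
  apply: (minimize (x0 := xs) (mu := mu) (lb := lb)) => //.
  - rewrite /psi /pen; apply: rcont_plus => //; apply: rcont_mul; first exact: rcont_const.
    apply: rcont_sum => i; apply: rcont_mul; exact: rcont_max0.
  - move=> x _; rewrite /psi; have := pen_ge0 x; have := Hlb x; nra.
  - move=> x y _ _; rewrite /psi /mid.
    have h1 := Hphi x y (a := /2) ltac:(lra).
    have h2 : pen (cc (/2) x y) <= (pen x + pen y) / 2.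
      rewrite /pen.
      have -> : forall A B : R, (A + B) / 2 = / 2 * A + / 2 * B by move=> *; field.
      rewrite -!sumZ -sumD; apply: sum_le => i.
      have := pen_mid (u := G i (cc (/2) x y)) (v := G i x) (w := G i y).
      have := HG i x y (a := /2) ltac:(lra); move=> h hh; have := hh ltac:(lra); lra.
    have : /2 * (1 - /2) = /4 by field.
    move=> E; rewrite E in h1.
    have : rho / 2 * pen (cc (/ 2) x y) <= rho / 2 * ((pen x + pen y) / 2) by apply: Rmult_le_compat_l; lra.
    lra.
set lam := fun i => rho * Rmax 0 (G i xr).
exists lam; split; first by move=> i; rewrite /lam; have := Rmax_l 0 (G i xr); nra.
have C1 : forall x, phi xr + \big[Rplus/0]_(i < m) (lam i * G i xr) <= phi x + \big[Rplus/0]_(i < m) (lam i * G i x).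
  move=> x.
  set K := rho / 2 * \big[Rplus/0]_(i < m) ((G i x - G i xr) * (G i x - G i xr)).
  have HK : 0 <= K.
    rewrite /K; apply: Rmult_le_pos. lra. apply: sum_ge0 => i. apply: Rle_0_sqr.
  suff : 0 <= phi x - phi xr + (\big[Rplus/0]_(i < m) (lam i * G i x) - \big[Rplus/0]_(i < m) (lam i * G i xr)) by lra.
  apply: (lim0 HK) => a Ha.
  have Hmin := Hxr (cc a x xr) I.
  have Hp1 := phi_conv x xr (a := a) ltac:(lra).
  have Hp2 : pen (cc a x xr) <= pen xr + 2 * a * \big[Rplus/0]_(i < m) (Rmax 0 (G i xr) * (G i x - G i xr))
                  + a * a * \big[Rplus/0]_(i < m) ((G i x - G i xr) * (G i x - G i xr)).
    rewrite /pen -!sumZ -!sumD; apply: sum_le => i.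
    apply: pen_bound; first lra.
    have := HG i x xr (a := a) ltac:(lra); lra.
  rewrite /psi in Hmin.
  have E : \big[Rplus/0]_(i < m) (lam i * G i x) - \big[Rplus/0]_(i < m) (lam i * G i xr) =
           rho * \big[Rplus/0]_(i < m) (Rmax 0 (G i xr) * (G i x - G i xr)).
    rewrite -sumB -sumZ; apply: sum_ext => i; rewrite /lam; ring.
  rewrite E /K.
  have : rho / 2 * pen (cc a x xr) <= rho / 2 * (pen xr + 2 * a * \big[Rplus/0]_(i < m) (Rmax 0 (G i xr) * (G i x - G i xr))
                  + a * a * \big[Rplus/0]_(i < m) ((G i x - G i xr) * (G i x - G i xr)))
    by apply: Rmult_le_compat_l; lra.
  nra.
have C2 : 0 <= \big[Rplus/0]_(i < m) (lam i * G i xr).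
  apply: sum_ge0 => i; rewrite /lam /Rmax; case: Rle_dec => h; nra.
have C3 : p - eps <= phi xr.
  have Hpsi : psi xr <= p.
    apply: Rle_trans (Hxr xs I) _; rewrite /psi /pen.
    have -> : \big[Rplus/0]_(i < m) (Rmax 0 (G i xs) * Rmax 0 (G i xs)) = 0.
      rewrite (@sum_ext _ (index_enum 'I_m) (fun i => Rmax 0 (G i xs) * Rmax 0 (G i xs)) (fun _ => 0)); first by rewrite sum0.
      move=> i /=.
      rewrite /Rmax; case: Rle_dec => h; last ring.
      have -> : G i xs = 0 by have := Hxs i; lra.
      ring.
    rewrite /p; lra.
  have Hsm : forall i, G i xr <= del.
    move=> i; apply: Rnot_lt_le => Hi.
    have hterm := @sum_term_le _ (index_enum 'I_m) (fun j => Rmax 0 (G j xr) * Rmax 0 (G j xr)) i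
                     (fun j => ltac:(have := Rmax_l 0 (G j xr); nra)) (mem_index_enum i).
    rewrite -/(pen xr) in hterm.
    have hmax : Rmax 0 (G i xr) = G i xr by rewrite /Rmax; case: Rle_dec => h; lra.
    rewrite hmax in hterm.
    have hsq : del * del < G i xr * G i xr by nra.
    have hrd : rho / 2 * (del * del) = p - lb + 1 by rewrite /rho; field; lra.
    have := Hlb xr; rewrite /psi in Hpsi.
    have : rho / 2 * (del * del) < rho / 2 * pen xr by apply: Rmult_lt_compat_l; lra.
    lra.
  set th := del / (del + s).
  have Hth : 0 < th < 1.
    rewrite /th; split; first by apply: Rdiv_lt_0_compat; lra.
    apply: (Rmult_lt_reg_r (del + s)); first lra.
    rewrite /Rdiv Rmult_assoc Rinv_l; lra.
  have Hfeas : forall i, G i (cc th xh xr) <= 0.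
    move=> i; apply: Rle_trans (HG i xh xr (a := th) ltac:(lra)) _.
    have := Hs' i; have := Hsm i => /= h1 h2.
    have E : th * s = (1 - th) * del by rewrite /th; field; lra.
    nra.
  have := Hopt Hfeas; have := phi_conv xh xr (a := th) ltac:(lra).
  rewrite -/ph -/p => h1 h2.
  have h3 : (1 - th) * (phi xr - p) >= th * (p - ph) by nra.
  have E1 : 1 - th = s / (del + s) by rewrite /th; field; lra.
  rewrite E1 /th in h3.
  have h4 : s * (phi xr - p) >= del * (p - ph).
    have Hds : 0 < del + s by lra.
    have := Rmult_ge_compat_r (del + s) _ _ (Rgt_ge _ _ Hds) h3.
    have -> : s / (del + s) * (phi xr - p) * (del + s) = s * (phi xr - p) by field; lra.
    have -> : del / (del + s) * (p - ph) * (del + s) = del * (p - ph) by field; lra.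
    done.
  have h5 : del * (ph - p) <= eps * s.
    rewrite /del.
    have -> : eps * s / (ph - p + 1) * (ph - p) = eps * s * ((ph - p) / (ph - p + 1)) by field; lra.
    have : (ph - p) / (ph - p + 1) <= 1.
      apply: (Rmult_le_reg_r (ph - p + 1)); first lra.
      rewrite /Rdiv Rmult_assoc Rinv_l; lra.
    have : 0 < eps * s by nra.
    nra.
  nra.
move=> x; have := C1 x; lra.
Qed.

Definition Lam eps (l : vec m) :=
  (forall i, 0 <= l i) /\ forall x, phi xs - eps <= phi x + \big[Rplus/0]_(i < m) (l i * G i x).

Lemma Lam_mono e e' l : e <= e' -> Lam e l -> Lam e' l.
Proof. move=> He [H1 H2]; split => // x; have := H2 x; lra. Qed.

Lemma Lam_bound e l : e <= 1 -> Lam e l ->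
  dot l l <= \big[Rplus/0]_(i < m) ((phi xh - phi xs + 1) / (- G i xh) * ((phi xh - phi xs + 1) / (- G i xh))).
Proof.
move=> He [H1 H2]; have := H2 xh => Hh.
have Hph : phi xs <= phi xh by apply: Hopt => i; have := Hxh i; lra.
have Hs : \big[Rplus/0]_(i < m) (l i * - G i xh) <= phi xh - phi xs + 1.
  have -> : \big[Rplus/0]_(i < m) (l i * - G i xh) = - \big[Rplus/0]_(i < m) (l i * G i xh).
    rewrite -(Rmult_1_l (\big[Rplus/0]_(i < m) (l i * G i xh))) Ropp_mult_distr_l -sumZ.
    apply: sum_ext => j; ring.
  lra.
apply: sum_le => i.
have hg := Hxh i.
have ht : l i * - G i xh <= \big[Rplus/0]_(j < m) (l j * - G j xh) := @sum_term_le _ (index_enum 'I_m) (fun j => l j * - G j xh) i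
             (fun j => ltac:(have := H1 j; have := Hxh j; nra)) (mem_index_enum i).
have hl : l i <= (phi xh - phi xs + 1) / - G i xh.
  apply: (Rmult_le_reg_r (- G i xh)); first lra.
  rewrite /Rdiv Rmult_assoc Rinv_l; lra.
have := H1 i; move=> h0; apply: Rmult_le_compat; lra.
Qed.

Lemma Lam_closed e u y : (forall k, Lam e (u k)) -> conv u y -> Lam e y.
Proof.
move=> Hu Hc; split.
  move=> i; apply: (lim_ge (rcont_conv (rcont_coord i) Hc)) => k; by case: (Hu k).
move=> x.
have Hr : rcontinuous (fun l : vec m => phi x + \big[Rplus/0]_(i < m) (l i * G i x)).
  apply: rcont_plus; first exact: rcont_const.
  apply: rcont_sum => i; apply: rcont_mul; [exact: rcont_coord | exact: rcont_const].
apply: (lim_ge (rcont_conv Hr Hc)) => k; by case: (Hu k) => _ /(_ x).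
Qed.

Lemma Lam_mid e l l' : Lam e l -> Lam e l' -> Lam e (mid l l').
Proof.
move=> [H1 H2] [H1' H2']; split.
  move=> i; rewrite /mid /cc /vadd /vscale; have := H1 i; have := H1' i; lra.
move=> x.
have -> : \big[Rplus/0]_(i < m) (mid l l' i * G i x) =
   / 2 * \big[Rplus/0]_(i < m) (l i * G i x) + (1 - / 2) * \big[Rplus/0]_(i < m) (l' i * G i x).
  rewrite -!sumZ -sumD; apply: sum_ext => i; rewrite /mid /cc /vadd /vscale; ring.
have := H2 x; have := H2' x; lra.
Qed.

Lemma dot_cc_self a (x y : vec m) : dot (cc a x y) (cc a x y) =
  a * dot x x + (1 - a) * dot y y - a * (1 - a) * (norm (vsub x y))^2.
Proof.
have E : forall v : vec m, vsub v (fun _ => 0) = v.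
  move=> v; apply: functional_extensionality => i; rewrite /vsub; ring.
have := nsq_cc a x y (fun _ => 0); rewrite !E !norm_sq; done.
Qed.

Definition epsk (k : nat) := / (INR k + 1).
Lemma epsk_pos k : 0 < epsk k.
Proof. apply: Rinv_0_lt_compat; have := pos_INR k; lra. Qed.
Lemma epsk_le1 k : epsk k <= 1.
Proof. rewrite /epsk -Rinv_1; apply: Rinv_le_contravar; first lra; have := pos_INR k; lra. Qed.
Lemma epsk_mono k j : (k <= j)%N -> epsk j <= epsk k.
Proof.
move=> /leP H; rewrite /epsk; apply: Rinv_le_contravar; first by have := pos_INR k; lra.
have := le_INR _ _ H; lra.
Qed.

Lemma kkt : exists lam : vec m, (forall i, 0 <= lam i) /\
    (forall x, phi xs <= phi x + \big[Rplus/0]_(i < m) (lam i * G i x)) /\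
    (forall i, lam i * G i xs = 0).
Proof.
have Hex : forall k, exists l, Lam (epsk k) l /\ forall l', Lam (epsk k) l' -> dot l l <= dot l' l'.
  move=> k; have [l0 Hl0] := penalty_step (epsk_pos k).
  apply: (minimize (x0 := l0) (mu := 2) (lb := 0)) => //; first lra.
  - exact: Lam_closed.
  - move=> *; exact: Lam_mid.
  - apply: (rcont_ext (F := fun l : vec m => \big[Rplus/0]_(i < m) (l i * l i))) => //.
    apply: rcont_sum => i; apply: rcont_mul; exact: rcont_coord.
  - move=> x _; exact: dot_ge0.
  - move=> x y _ _; rewrite /mid dot_cc_self.
    have : / 2 * (1 - / 2) = 2 / 8 by field.
    move=> ->; lra.
have [L HL] := functional_choice _ Hex.
set Nk := fun k => dot (L k) (L k).
have HLk : forall k j, (k <= j)%N -> Lam (epsk k) (L j).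
  move=> k j Hkj; apply: Lam_mono (epsk_mono Hkj) _; by case: (HL j).
have Hmono : forall k j, (k <= j)%N -> Nk k <= Nk j.
  move=> k j Hkj; rewrite /Nk; case: (HL k) => _; apply; exact: HLk.
have Hgap : forall k j, (k <= j)%N -> (norm (vsub (L j) (L k)))^2 <= 2 * (Nk j - Nk k).
  move=> k j Hkj.
  have Hm := Lam_mid (HLk _ _ Hkj) (proj1 (HL k)).
  case: (HL k) => _ /(_ _ Hm); rewrite /mid dot_cc_self -/(Nk j) -/(Nk k).
  have : / 2 * (1 - / 2) = / 4 by field.
  move=> ->; lra.
have Hgrow : Un_growing Nk by move=> k; apply: Hmono; exact: leqnSn.
have Hub : has_ub Nk.
  exists (\big[Rplus/0]_(i < m) ((phi xh - phi xs + 1) / (- G i xh) * ((phi xh - phi xs + 1) / (- G i xh)))).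
  move=> r [k ->]; apply: Lam_bound (epsk_le1 k) _; by case: (HL k).
have HC := CV_Cauchy _ (growing_cv _ Hgrow Hub).
have HcL : forall e, 0 < e -> exists N, forall p q, (N <= p)%N -> (N <= q)%N -> norm (vsub (L p) (L q)) < e.
  move=> e He; have [N HN] := HC (e * e / 2) ltac:(nra).
  exists N => p q Hp Hq.
  have Hd := HN p q (elimT leP Hp) (elimT leP Hq); rewrite /R_dist in Hd.
  have key : (norm (vsub (L p) (L q)))^2 < e * e.
    case: (leqP p q) => Hpq.
      rewrite norm_sym; have := Hgap _ _ Hpq; rewrite Rabs_minus_sym in Hd.
      have := Rle_abs (Nk q - Nk p); lra.
    have := Hgap _ _ (ltnW Hpq); have := Rle_abs (Nk p - Nk q); lra.
  have := norm_ge0 (vsub (L p) (L q)); simpl in key; nra.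
have [ls Hls] := complete HcL.
have Hlsk : forall k, Lam (epsk k) ls.
  move=> k; apply: (Lam_closed (u := fun j => L (j + k)%N)).
    move=> j; apply: HLk; exact: leq_addl.
  move=> e He; have [N HN] := Hls e He; exists N => j Hj; apply: HN.
  exact: leq_trans Hj (leq_addr k j).
exists ls; split; first by case: (Hlsk 0%nat).
have Hall : forall x, phi xs <= phi x + \big[Rplus/0]_(i < m) (ls i * G i x).
  move=> x; apply: Rnot_lt_le => Hlt.
  have [N HN] := inv_small (a := phi xs - (phi x + \big[Rplus/0]_(i < m) (ls i * G i x))) ltac:(lra).
  have := HN N (leqnn N); case: (Hlsk N) => _ /(_ x); rewrite /epsk; lra.
split => //.
move=> i; apply: (sum_ge0_le0_eq (F := fun j => ls j * G j xs)).
- move=> j /=; case: (Hlsk 0%nat) => /(_ j) h _; have := Hxs j; nra.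
- have H0 : 0 <= \big[Rplus/0]_(j < m) (ls j * G j xs) by have := Hall xs; lra.
  exact: H0.
- exact: mem_index_enum.
Qed.
End KKT.
Lemma lim_le v l c : Un_cv v l -> (forall k, v k <= c) -> l <= c.
Proof.
move=> Hv Hc; apply: Rnot_lt_le => Hl.
have [N HN] := Hv (l - c) ltac:(lra).
have := HN N (le_n N); rewrite /R_dist => h.
have := Hc N; have := Rle_abs (l - v N); rewrite Rabs_minus_sym; lra.
Qed.

Lemma slater_scalar g0 al be : g0 <= 0 -> 0 <= be -> (g0 = 0 -> al < 0) ->
  exists s0, 0 < s0 /\ forall s, 0 < s <= s0 -> g0 + s * al + s * s * be < 0.
Proof.
move=> Hg Hb Ha.
case: (Rlt_le_dec g0 0) => Hg0.
  have Hab := Rabs_pos al.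
  exists (Rmin 1 (- g0 / (Rabs al + be + 1))); split.
    apply: Rmin_pos; [lra| apply: Rdiv_lt_0_compat; lra].
  move=> s [Hs Hs0].
  have h1 : s <= 1 := Rle_trans _ _ _ Hs0 (Rmin_l _ _).
  have h2 : s <= - g0 / (Rabs al + be + 1) := Rle_trans _ _ _ Hs0 (Rmin_r _ _).
  have h3 : s * (Rabs al + be + 1) <= - g0.
    have -> : - g0 = - g0 / (Rabs al + be + 1) * (Rabs al + be + 1) by field; lra.
    apply: Rmult_le_compat_r; lra.
  have h4 : s * al <= s * Rabs al by apply: Rmult_le_compat_l; [lra| apply: Rle_abs].
  have h5 : s * s * be <= s * be by apply: Rmult_le_compat_r => //; nra.
  nra.
have Hg00 : g0 = 0 by lra.
have Hal := Ha Hg00.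
exists (- al / (be + 1)); split; first by apply: Rdiv_lt_0_compat; lra.
move=> s [Hs Hs0].
have h3 : s * (be + 1) <= - al.
  have -> : - al = - al / (be + 1) * (be + 1) by field; lra.
  apply: Rmult_le_compat_r; lra.
rewrite Hg00; nra.
Qed.

Lemma Qf_diff n (c : vec n) w x0 y z : Qf c w x0 y - Qf c w x0 z =
  dot (vadd c (vscale w (vsub z x0))) (vsub y z) + w / 2 * (norm (vsub y z))^2.
Proof.
rewrite /Qf !norm_sq; dexp.
rewrite (dot_comm y x0) (dot_comm z x0) (dot_comm y z); field.
Qed.

Section Problem.
Variables (n m : nat) (f : vec n -> R) (gradf : vec n -> vec n) (P1 P2 : vec n -> R)
  (g : 'I_m -> vec n -> R) (gradg : 'I_m -> vec n -> vec n) (Lfmod : R) (Lgmod : 'I_m -> R).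
Hypotheses (Hf : is_gradient f gradf) (HP1c : convex P1) (HP1r : rcontinuous P1)
  (Hgcont : forall i, rcontinuous (g i)) (HA1 : lipschitz gradf Lfmod)
  (HB2 : MFCQ g gradg).
Variables (xt xi : vec n) (Lf : R) (Lg : vec m).
Hypotheses (Hxt : feasible g xt) (HLf : 0 < Lf) (HLg : forall i, 0 < Lg i).

Notation h0 := (subobj gradf P1 xt xi Lf).
Notation Gb := (fun i x => Gbar g gradg x xt Lg i).

Lemma h0_eq x : h0 x = Qf (vsub (gradf xt) xi) Lf xt x + P1 x.
Proof. by rewrite /subobj /Qf. Qed.
Lemma Gb_eq i x : Gb i x = g i xt + Qf (gradg i xt) (Lg i) xt x.
Proof. rewrite /Gbar /Qf; ring. Qed.

Lemma h0_sc a x y : 0 <= a <= 1 ->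
  h0 (cc a x y) <= a * h0 x + (1 - a) * h0 y - Lf / 2 * (a * (1 - a)) * (norm (vsub x y))^2.
Proof.
move=> Ha; rewrite !h0_eq Q_cc.
have hp : P1 (cc a x y) <= a * P1 x + (1 - a) * P1 y by apply: HP1c.
lra.
Qed.
Lemma Gb_conv i a x y : 0 <= a <= 1 -> Gb i (cc a x y) <= a * Gb i x + (1 - a) * Gb i y.
Proof.
move=> Ha; rewrite /= !Gb_eq Q_cc.
have : 0 <= Lg i / 2 * (a * (1 - a)) * (norm (vsub x y))^2.
  apply: Rmult_le_pos; last by have := norm_ge0 (vsub x y); simpl; nra.
  apply: Rmult_le_pos; have := HLg i; nra.
lra.
Qed.
Lemma Qf_cont c w : rcontinuous (Qf c w xt).
Proof. apply: rcont_plus; [exact: rcont_dot| apply: rcont_mul; [exact: rcont_const| exact: rcont_nsq]]. Qed.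
Lemma h0_cont : rcontinuous h0.
Proof. apply: (rcont_ext (F := fun x => Qf (vsub (gradf xt) xi) Lf xt x + P1 x)); first by move=> x; rewrite h0_eq.
apply: rcont_plus => //; exact: Qf_cont. Qed.
Lemma Gb_cont i : rcontinuous (Gb i).
Proof. apply: (rcont_ext (F := fun x => g i xt + Qf (gradg i xt) (Lg i) xt x)); first by move=> x; rewrite Gb_eq.
apply: rcont_plus; [exact: rcont_const| exact: Qf_cont]. Qed.

Lemma h0_lb : exists lb, forall x, lb <= h0 x.
Proof.
have [K [HK HK']] := conv_lb xt HP1c HP1r.
set B := K + norm (vsub (gradf xt) xi).
have HB : 0 <= B by have := norm_ge0 (vsub (gradf xt) xi); rewrite /B; lra.
exists (P1 xt - 1 - B * B / (2 * Lf)) => x.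
rewrite h0_eq /Qf.
set r := norm (vsub x xt).
have hr : 0 <= r := norm_ge0 _.
have h1 := HK' x; rewrite -/r in h1.
have h2 : - (norm (vsub (gradf xt) xi) * r) <= dot (vsub (gradf xt) xi) (vsub x xt).
  have := CS (vsub (gradf xt) xi) (vsub x xt); rewrite -/r => h.
  have := Rle_abs (- dot (vsub (gradf xt) xi) (vsub x xt)); rewrite Rabs_Ropp; lra.
have h3 : - (B * B / (2 * Lf)) <= Lf / 2 * r ^ 2 - B * r.
  have -> : Lf / 2 * r ^ 2 - B * r = (Lf * r - B) * (Lf * r - B) / (2 * Lf) - B * B / (2 * Lf) by field; lra.
  have : 0 <= (Lf * r - B) * (Lf * r - B) / (2 * Lf) by apply: Rmult_le_pos; [apply: Rle_0_sqr| apply: Rlt_le; apply: Rinv_0_lt_compat; lra].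
  lra.
rewrite /B in h3 *; lra.
Qed.

Lemma xt_feasS i : Gb i xt <= 0.
Proof.
rewrite /= /Gbar.
have -> : vsub xt xt = (fun _ => 0) by apply: functional_extensionality => j; rewrite /vsub; ring.
have -> : dot (gradg i xt) (fun _ : 'I_n => 0) = 0.
  rewrite /dot (@sum_ext _ _ _ (fun _ => 0)) ?sum0 // => j; ring.
have -> : norm (fun _ : 'I_n => 0) = 0.
  rewrite /norm /dot (@sum_ext _ _ _ (fun _ => 0)) ?sum0 ?sqrt_0 // => j; ring.
have := Hxt i; lra.
Qed.

Lemma slater : exists xh, forall i, Gb i xh < 0.
Proof.
have [d Hd] := HB2 Hxt.
have Hs : forall i, exists s0, 0 < s0 /\ forall s, 0 < s <= s0 ->
    g i xt + s * dot (gradg i xt) d + s * s * (Lg i / 2 * (norm d)^2) < 0.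
  move=> i; apply: slater_scalar; first exact: Hxt.
    apply: Rmult_le_pos; [have := HLg i; lra| have := norm_ge0 d; simpl; nra].
  exact: Hd.
have [s0 Hs0] := functional_choice _ Hs.
have [t [Ht Ht']] := finite_min (s := s0) (fun i => proj1 (Hs0 i)).
exists (line xt d t) => i /=.
have E : vsub (line xt d t) xt = vscale t d.
  apply: functional_extensionality => j; rewrite /line /vsub /vadd /vscale; ring.
rewrite /Gbar E dot_scaler norm_scale Rabs_right; last lra.
have := proj2 (Hs0 i) t (conj Ht (Ht' i)).
have -> : Lg i / 2 * (t * norm d) ^ 2 = t * t * (Lg i / 2 * norm d ^ 2) by ring.
done.
Qed.

Lemma ssol_ex : exists xs, Ssol gradf P1 g gradg xt xi Lf Lg xs.
Proof.
have [lb Hlb] := h0_lb.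
have [z [Hz Hz']] : exists z, (forall i, Gb i z <= 0) /\
    forall x, (forall i, Gb i x <= 0) -> h0 z <= h0 x.
  apply: (minimize (S := fun x => forall i, Gb i x <= 0) (x0 := xt) (mu := Lf) (lb := lb)) => //.
  - exact: xt_feasS.
  - move=> u y Hu Hc i; exact: (lim_le (rcont_conv (Gb_cont i) Hc) (fun k => Hu k i)).
  - move=> x y Hx Hy i; have := @Gb_conv i (/2) x y ltac:(lra).
    have := Hx i; have := Hy i; rewrite /mid; simpl; lra.
  - exact: h0_cont.
  - move=> x y _ _; have := @h0_sc (/2) x y ltac:(lra).
    have -> : / 2 * (1 - / 2) = / 4 by field.
    rewrite /mid; lra.
by exists z; split.
Qed.

Lemma ssol_unique x y : Ssol gradf P1 g gradg xt xi Lf Lg x -> Ssol gradf P1 g gradg xt xi Lf Lg y -> y = x.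
Proof.
move=> [Hx Hx'] [Hy Hy'].
have Hm : forall i, Gbar g gradg (cc (/2) x y) xt Lg i <= 0.
  move=> i; have := @Gb_conv i (/2) x y ltac:(lra) => /= h.
  have := Hx i; have := Hy i; lra.
have h1 := Hx' _ Hm. have h2 := Hx' _ Hy. have h3 := Hy' _ Hx.
have h4 := @h0_sc (/2) x y ltac:(lra).
have h5 : (norm (vsub x y))^2 = 0.
  have := norm_ge0 (vsub x y); simpl in h4 |- *; nra.
symmetry; apply: norm_eq0; have := norm_ge0 (vsub x y); simpl in h5; nra.
Qed.

Lemma fval_bound x : subgrad P2 xt xi ->
  Fval f P1 P2 x <= f xt - P2 xt + h0 x + (Lfmod - Lf) / 2 * (norm (vsub x xt))^2.
Proof.
move=> Hxi; have h1 := descent xt x Hf HA1.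
have h2 := Hxi x.
rewrite /Fval /subobj dot_subl; lra.
Qed.

Lemma dot_va (A : 'I_m -> vec n) (lam : vec m) (u : vec n) :
  dot (fun j => \big[Rplus/0]_(i < m) (lam i * A i j)) u = \big[Rplus/0]_(i < m) (lam i * dot (A i) u).
Proof.
rewrite /dot.
rewrite (@sum_ext _ _ _ (fun j => \big[Rplus/0]_(i < m) (lam i * A i j * u j))); last by move=> j; rewrite -sumZr.
rewrite sum_exch; apply: sum_ext => i; rewrite -sumZ; apply: sum_ext => j; ring.
Qed.

Lemma trial_facts : subgrad P2 xt xi ->
  exists xs, Ssol gradf P1 g gradg xt xi Lf Lg xs /\
        (forall y, Ssol gradf P1 g gradg xt xi Lf Lg y -> y = xs) /\
        exists lam : vec m,
          is_multiplier gradf P1 g gradg xt xi Lf Lg xs lam /\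
          let Lfg := Lf + dot lam Lg in
          (forall i, lam i * (g i xt + dot (gradg i xt) (vsub xs xt)
                              + Lg i / 2 * (norm (vsub xs xt))^2) = 0) /\
          (exists v, subgrad P1 xs v /\
             forall j, gradf xt j - xi j + Lfg * (xs j - xt j) + v j
                       + \big[Rplus/0]_(i < m) (lam i * gradg i xt j) = 0) /\
          (feasible g xs -> forall x : vec n,
             Fval f P1 P2 xs <=
               f xt + dot (vsub (gradf xt) xi) (vsub x xt)
               + Lfg / 2 * (norm (vsub x xt))^2 + P1 x - P2 xt
               + \big[Rplus/0]_(i < m) (lam i * (g i xt + dot (gradg i xt) (vsub x xt)))
               - Lfg / 2 * (norm (vsub x xs))^2
               - (Lf - Lfmod) / 2 * (norm (vsub xs xt))^2).
Proof.
move=> Hxi.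
have [xs Hxs] := ssol_ex.
exists xs; split => //; split; first by move=> y Hy; exact: ssol_unique.
have [lb Hlb] := h0_lb.
have [xh Hxh] := slater.
case: Hxs => Hxs1 Hxs2.
have [lam [Hl1 [Hl2 Hl3]]] := @kkt n m h0 Gb Lf lb xs xh HLf h0_sc Gb_conv h0_cont Gb_cont Hlb Hxs1 Hxs2 Hxh.
set Lfg := Lf + dot lam Lg.
have HLfg : 0 <= Lfg.
  rewrite /Lfg; have : 0 <= dot lam Lg by apply: sum_ge0 => i; have := Hl1 i; have := HLg i; nra.
  lra.
set c := vsub (gradf xt) xi.
set va : vec n := fun j => \big[Rplus/0]_(i < m) (lam i * gradg i xt j).
set W : vec n := fun j => gradf xt j - xi j + Lfg * (xs j - xt j) + va j.
set C0 := \big[Rplus/0]_(i < m) (lam i * g i xt).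
have Hlag : forall x, lagr gradf P1 g gradg xt xi Lf Lg lam x = P1 x + C0 + Qf (vadd c va) Lfg xt x.
  move=> x; rewrite /lagr /subobj /Qf /Gbar.
  have -> : \big[Rplus/0]_(i < m) (lam i * (g i xt + dot (gradg i xt) (vsub x xt) + Lg i / 2 * norm (vsub x xt) ^ 2))
      = C0 + \big[Rplus/0]_(i < m) (lam i * dot (gradg i xt) (vsub x xt)) + dot lam Lg / 2 * norm (vsub x xt) ^ 2.
    have -> : dot lam Lg / 2 * norm (vsub x xt) ^ 2 = dot lam Lg * (/ 2 * norm (vsub x xt) ^ 2) by field.
    rewrite /C0 {3}/dot -sumZr -!sumD; apply: sum_ext => i; rewrite /Rdiv; ring.
  rewrite -dot_va -/va dot_addl /Lfg -/c; field.
have Hdiff : forall x, lagr gradf P1 g gradg xt xi Lf Lg lam x - lagr gradf P1 g gradg xt xi Lf Lg lam xs =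
     P1 x - P1 xs + dot W (vsub x xs) + Lfg / 2 * (norm (vsub x xs))^2.
  move=> x; rewrite !Hlag.
  have E := Qf_diff (vadd c va) Lfg xt x xs.
  have EW : vadd (vadd c va) (vscale Lfg (vsub xs xt)) = W.
    apply: functional_extensionality => j; rewrite /W /c /vadd /vscale /vsub; ring.
  rewrite EW in E.
  lra.
have Hlxs : lagr gradf P1 g gradg xt xi Lf Lg lam xs = h0 xs.
  rewrite /lagr (@sum_ext _ _ _ (fun _ => 0)) ?sum0; first lra.
  move=> i; exact: Hl3.
have Hmin : forall x, lagr gradf P1 g gradg xt xi Lf Lg lam xs <= lagr gradf P1 g gradg xt xi Lf Lg lam x.
  move=> x; rewrite Hlxs /lagr; exact: Hl2.
set v := vscale (-1) W.
have Hsub : subgrad P1 xs v.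
  move=> y.
  have HK : 0 <= Lfg / 2 * (norm (vsub y xs))^2 by apply: Rmult_le_pos; [lra| simpl; have := norm_ge0 (vsub y xs); nra].
  have := lim0 HK (T := P1 y - P1 xs + dot W (vsub y xs)).
  rewrite /v dot_scalel.
  move=> H; suff : 0 <= P1 y - P1 xs + dot W (vsub y xs) by lra.
  apply: H => a Ha.
  have h1 := Hmin (cc a y xs).
  have h2 := Hdiff (cc a y xs).
  have h3 : P1 (cc a y xs) <= a * P1 y + (1 - a) * P1 xs by apply: HP1c; lra.
  rewrite vsub_cc dot_scaler norm_scale Rabs_right in h2; last lra.
  have E : Lfg / 2 * (a * norm (vsub y xs)) ^ 2 = a * a * (Lfg / 2 * (norm (vsub y xs))^2) by ring.
  rewrite E in h2.
  lra.
exists lam; split.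
  split => //; split => //.
cbv zeta; rewrite -/Lfg.
split; first by move=> i; exact: Hl3.
split.
  exists v; split => // j; rewrite /v /W /va /vscale; ring.
move=> _ x.
have Hfv := fval_bound xs Hxi.
have Hsx := Hsub x; rewrite /v dot_scalel in Hsx.
have Hd := Hdiff x.
have Hl := Hlag x.
have -> : \big[Rplus/0]_(i < m) (lam i * (g i xt + dot (gradg i xt) (vsub x xt))) = C0 + dot va (vsub x xt).
  rewrite /C0 /va dot_va -sumD; apply: sum_ext => i; rewrite Rmult_plus_distr_l; reflexivity.
rewrite /Qf dot_addl -/c in Hl.
rewrite -/c; lra.
Qed.
End Problem.

Lemma zero_facts n (xt : vec n) (c : vec n) : dot c (vsub xt xt) = 0 /\ norm (vsub xt xt) = 0.
Proof.
have -> : vsub xt xt = (fun _ => 0) by apply: functional_extensionality => j; rewrite /vsub; ring.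
split.
  rewrite /dot (@sum_ext _ _ _ (fun _ => 0)) ?sum0 // => j; ring.
rewrite /norm /dot (@sum_ext _ _ _ (fun _ => 0)) ?sum0 ?sqrt_0 // => j; ring.
Qed.

Lemma subobj_self n (gradf : vec n -> vec n) P1 xt xi Lf : subobj gradf P1 xt xi Lf xt = P1 xt.
Proof. have [h1 h2] := zero_facts xt (vsub (gradf xt) xi); rewrite /subobj h1 h2 /=; ring. Qed.

Lemma Gbar_self n m (g : 'I_m -> vec n -> R) gradg xt Lg i : Gbar g gradg xt xt Lg i = g i xt.
Proof. have [h1 h2] := zero_facts xt (gradg i xt); rewrite /Gbar h1 h2 /=; ring. Qed.

Unset Implicit Arguments.
Set Strict Implicit.

Theorem mainTheorem1
  (n m : nat)
  (f : vec n -> R) (gradf : vec n -> vec n)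
  (P1 P2 : vec n -> R)
  (g : 'I_m -> vec n -> R) (gradg : 'I_m -> vec n -> vec n)
  (Lfmod : R) (Lgmod : 'I_m -> R)
  (* standing assumptions on (P) *)
  (Hf : is_gradient f gradf) (Hgradf_cont : vcontinuous gradf)
  (HP1c : convex P1) (HP1r : rcontinuous P1)
  (HP2c : convex P2) (HP2r : rcontinuous P2)
  (Hgcont : forall i, rcontinuous (g i))
  (Hfeas : exists x, feasible g x)
  (* Assumption A *)
  (HA1 : lipschitz gradf Lfmod)
  (HA2 : forall i, is_gradient (g i) (gradg i) /\ lipschitz (gradg i) (Lgmod i))
  (HA3 : level_bounded f P1 P2 g)
  (* Assumption B *)
  (HB1 : forall i, vcontinuous (gradg i))
  (HB2 : MFCQ g gradg)
  (* parameters of SCP_ls *)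
  (c Llo Lhi tau : R) (x0 : vec n)
  (Hc : 0 < c) (HL : 0 < Llo < Lhi) (Htau : 1 < tau) (Hx0 : feasible g x0) :
  exists (k0 : nat) (M : R), (1 <= k0)%nat /\
  forall t xt, reachable f P1 P2 gradf g gradg c tau Llo Lhi x0 t xt ->
  forall xi L0f L0g, subgrad P2 xt xi -> Llo <= L0f <= Lhi ->
    (forall i, Llo <= L0g i <= Lhi) ->
    (* (i) termination of the inner loop within k0 inner iterations *)
    (exists k Lf Lg x', (k < k0)%nat /\
       trial f P1 P2 gradf g gradg c tau xt xi L0f L0g k Lf Lg /\
       Ssol gradf P1 g gradg xt xi Lf Lg x' /\ accepted f P1 P2 g c xt x') /\
    forall k Lf Lg, trial f P1 P2 gradf g gradg c tau xt xi L0f L0g k Lf Lg ->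
      (* (i) at most k0 inner iterations *)
      (k < k0)%nat /\
      (* (ii) boundedness of the (trial, hence accepted) pairs *)
      Rabs Lf <= M /\ (forall i, Rabs (Lg i) <= M) /\
      (* (iii) *)
      (forall i, 0 < (norm (vscale (/ Lg i) (gradg i xt)))^2 - 2 / Lg i * g i xt) /\
      (* (i) unique solvability of (S) and (iv) *)
      exists xs, Ssol gradf P1 g gradg xt xi Lf Lg xs /\
        (forall y, Ssol gradf P1 g gradg xt xi Lf Lg y -> y = xs) /\
        exists lam : vec m,
          is_multiplier gradf P1 g gradg xt xi Lf Lg xs lam /\
          let Lfg := Lf + dot lam Lg in
          (forall i, lam i * (g i xt + dot (gradg i xt) (vsub xs xt)
                              + Lg i / 2 * (norm (vsub xs xt))^2) = 0) /\
          (exists v, subgrad P1 xs v /\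
             forall j, gradf xt j - xi j + Lfg * (xs j - xt j) + v j
                       + \big[Rplus/0]_(i < m) (lam i * gradg i xt j) = 0) /\
          (feasible g xs -> forall x : vec n,
             Fval f P1 P2 xs <=
               f xt + dot (vsub (gradf xt) xi) (vsub x xt)
               + Lfg / 2 * (norm (vsub x xt))^2 + P1 x - P2 xt
               + \big[Rplus/0]_(i < m) (lam i * (g i xt + dot (gradg i xt) (vsub x xt)))
               - Lfg / 2 * (norm (vsub x xs))^2
               - (Lf - Lfmod) / 2 * (norm (vsub xs xt))^2).


Proof.
set Mg := \big[Rplus/0]_(i < m) Rabs (Lgmod i).
have HMg : forall i, Lgmod i <= Mg.
  move=> i; apply: Rle_trans (Rle_abs _) _.
  exact: (@sum_term_le _ (index_enum 'I_m) (fun j => Rabs (Lgmod j)) i (fun j => Rabs_pos _) (mem_index_enum i)).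
have Htau0 : 0 < tau by lra.
have Hpow : forall b, exists K : nat, b <= tau ^ K * Llo.
  move=> b; have [N HN] := Pow_x_infinity tau ltac:(rewrite Rabs_right; lra) (b / Llo).
  exists N; have := HN N (le_n N); rewrite Rabs_right; last by apply: Rle_ge; apply: Rlt_le; apply: pow_lt.
  move=> h; have -> : b = b / Llo * Llo by field; lra.
  apply: Rmult_le_compat_r; lra.
have [Ka HKa] := Hpow Mg. have [Kb HKb] := Hpow (Lfmod + c).
exists (Ka + Kb).+1, (tau ^ Kb * Lhi + tau ^ Ka * Lhi).
split; first done.
move=> t xt Hreach xi L0f L0g Hxi HL0f HL0g.
have Hxt : feasible g xt.
  case: Hreach => //; move=> ? ? ? ? ? ? ? ? ? _ _ _ _ _ _ []; done.
have Hgmon : forall a, (Ka <= a)%N -> forall i, Lgmod i <= tau ^ a * L0g i.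
  move=> a Ha i; apply: Rle_trans (HMg i) _; apply: Rle_trans HKa _.
  apply: Rmult_le_compat; try lra.
  - apply: Rlt_le; exact: pow_lt.
  - apply: Rle_pow; [lra| exact/leP].
  - by case: (HL0g i).
have Hfmon : forall b, (Kb <= b)%N -> Lfmod + c <= tau ^ b * L0f.
  move=> b Hb; apply: Rle_trans HKb _.
  apply: Rmult_le_compat; try lra.
  - apply: Rlt_le; exact: pow_lt.
  - apply: Rle_pow; [lra| exact/leP].
have Hinv : forall k Lf Lg, trial f P1 P2 gradf g gradg c tau xt xi L0f L0g k Lf Lg ->
    exists a b, k = (a + b)%N /\ (a <= Ka)%N /\ (b <= Kb)%N /\ Lf = tau ^ b * L0f /\
      forall i, Lg i = tau ^ a * L0g i.
  move=> k Lf Lg; elim => {k Lf Lg}.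
  - exists 0%N, 0%N; split => //; split => //; split => //; split => /=; first ring.
    move=> i; ring.
  - move=> k Lf Lg x Ht [a [b [Hk [Ha [Hb [HLf HLg]]]]]] Hs Hnf.
    have Ha' : (a < Ka)%N.
      rewrite ltnNge; apply/negP => Hka; apply: Hnf => i.
      have [HA2i HA2l] := HA2 i.
      have hd := descent xt x HA2i HA2l.
      have hs := proj1 Hs i; rewrite /Gbar in hs.
      have hg := Hgmon a Hka i; rewrite -HLg in hg.
      have := norm_ge0 (vsub x xt); simpl in hd, hs |- *; nra.
    exists a.+1, b; split; first by rewrite Hk addSn.
    split => //; split => //; split => //.
    move=> i; rewrite /vscale HLg /=; ring.
  - move=> k Lf Lg x Ht [a [b [Hk [Ha [Hb [HLf HLg]]]]]] Hs Hfe Hnd.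
    have Hb' : (b < Kb)%N.
      rewrite ltnNge; apply/negP => Hkb; apply: Hnd.
      have hf := Hfmon b Hkb; rewrite -HLf in hf.
      have h1 := fval_bound P1 Hf HA1 Lf x Hxi.
      have h2 := proj2 Hs xt (fun i => ltac:(rewrite Gbar_self; exact: Hxt)).
      rewrite subobj_self in h2.
      have := norm_ge0 (vsub x xt); rewrite /Fval in h1 |- *; simpl in h1 |- *; nra.
    exists a, b.+1; split; first by rewrite Hk addnS.
    split => //; split => //; split => //.
    rewrite HLf /=; ring.
have Hpos : forall k Lf Lg, trial f P1 P2 gradf g gradg c tau xt xi L0f L0g k Lf Lg ->
    (k < (Ka + Kb).+1)%N /\ 0 < Lf /\ (forall i, 0 < Lg i) /\ Rabs Lf <= tau ^ Kb * Lhi + tau ^ Ka * Lhi /\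
    (forall i, Rabs (Lg i) <= tau ^ Kb * Lhi + tau ^ Ka * Lhi).
  move=> k Lf Lg Ht; have [a [b [Hk [Ha [Hb [HLf HLg]]]]]] := Hinv _ _ _ Ht.
  have pa : 0 < tau ^ Ka * Lhi by apply: Rmult_lt_0_compat; [exact: pow_lt| lra].
  have pb : 0 < tau ^ Kb * Lhi by apply: Rmult_lt_0_compat; [exact: pow_lt| lra].
  have ta := pow_lt tau a Htau0. have tb := pow_lt tau b Htau0.
  have ta' : tau ^ a <= tau ^ Ka by apply: Rle_pow; [lra| exact/leP].
  have tb' : tau ^ b <= tau ^ Kb by apply: Rle_pow; [lra| exact/leP].
  split; first by rewrite Hk ltnS; exact: leq_add.
  split; first by rewrite HLf; apply: Rmult_lt_0_compat; lra.
  split; first by move=> i; rewrite HLg; case: (HL0g i) => h _; apply: Rmult_lt_0_compat; lra.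
  split.
    rewrite HLf Rabs_right; last by apply: Rle_ge; apply: Rmult_le_pos; lra.
    have : tau ^ b * L0f <= tau ^ Kb * Lhi by apply: Rmult_le_compat; lra.
    lra.
  move=> i; rewrite HLg Rabs_right; last by case: (HL0g i) => h _; apply: Rle_ge; apply: Rmult_le_pos; lra.
  have : tau ^ a * L0g i <= tau ^ Ka * Lhi by case: (HL0g i) => h h'; apply: Rmult_le_compat; lra.
  lra.
split.
  have Hterm : forall j k Lf Lg, trial f P1 P2 gradf g gradg c tau xt xi L0f L0g k Lf Lg ->
      ((Ka + Kb).+1 - k <= j)%N ->
      exists k' Lf' Lg' x', (k' < (Ka + Kb).+1)%N /\
        trial f P1 P2 gradf g gradg c tau xt xi L0f L0g k' Lf' Lg' /\
        Ssol gradf P1 g gradg xt xi Lf' Lg' x' /\ accepted f P1 P2 g c xt x'.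
    elim => [|j IH] k Lf Lg Ht Hj; have [Hk [HLf [HLg _]]] := Hpos _ _ _ Ht.
      by move: Hj; rewrite leqn0 subn_eq0 leqNgt Hk.
    have [x Hx] := ssol_ex gradf gradg HP1c HP1r xi Hxt HLf HLg.
    case: (classic (accepted f P1 P2 g c xt x)) => Hacc.
      by exists k, Lf, Lg, x.
    case: (classic (feasible g x)) => Hfe.
      have Ht' := trial_nodecr Ht Hx Hfe (fun Hd => Hacc (conj Hfe Hd)).
      apply: (IH _ _ _ Ht'); by rewrite subnS -ltnS prednK // subn_gt0.
    have Ht' := trial_infeas Ht Hx Hfe.
    apply: (IH _ _ _ Ht'); by rewrite subnS -ltnS prednK // subn_gt0.
  apply: (Hterm (Ka + Kb).+1 0%N L0f L0g); first exact: trial0.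
  by rewrite subn0.
move=> k Lf Lg Ht.
have [Hk [HLf [HLg [HbLf HbLg]]]] := Hpos _ _ _ Ht.
split => //; split => //; split => //; split.
  move=> i.
  have HLi := HLg i.
  rewrite norm_scale Rabs_right; last by apply: Rle_ge; apply: Rlt_le; apply: Rinv_0_lt_compat.
  have hg := Hxt i.
  have hn := norm_ge0 (gradg i xt).
  have hinv : 0 < / Lg i by apply: Rinv_0_lt_compat.
  case: (Rlt_le_dec (g i xt) 0) => hgi.
    have : 0 < - (2 / Lg i * g i xt).
      have -> : - (2 / Lg i * g i xt) = 2 * / Lg i * (- g i xt) by rewrite /Rdiv; ring.
      apply: Rmult_lt_0_compat; lra.
    simpl; nra.
  have hg0 : g i xt = 0 by lra.
  have [d Hd] := HB2 xt Hxt.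
  have Hdi := Hd i hg0.
  have hpos : 0 < norm (gradg i xt).
    case: (Rle_lt_or_eq_dec _ _ hn) => // h0.
    have := CS (gradg i xt) d; rewrite -h0 Rmult_0_l => h.
    have := Rabs_pos (dot (gradg i xt) d); have := Rle_abs (- dot (gradg i xt) d); rewrite Rabs_Ropp; lra.
  rewrite hg0 /=; have : 0 < / Lg i * norm (gradg i xt) by apply: Rmult_lt_0_compat.
  nra.
exact: (trial_facts Hf HP1c HP1r HA1 HB2 Hxt HLf HLg Hxi).
Qed.
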